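(* Let $v:\mathbb{T}\to\mathbb{R}$ be real-analytic, $\alpha\in\mathbb{R}\setminus\mathbb{Q}$, $E\in\mathbb{R}$, and let $\epsilon$ (in the strip of holomorphy of $v$) satisfy $m:=m(\epsilon;E)=\min_{x\in\mathbb{T}}|E-v(x+i\epsilon)|>2$. Then $(\alpha,B^E(\cdot+i\epsilon))$ is uniformly hyperbolic and $$L(\epsilon;E)=\int_{\mathbb{T}}\log|E-v(x+i\epsilon)|\,dx+\Xi,$$ where, with $\sigma:=\min\Big\{1,\ \frac{m-1}{m(m-2)}\Big\}$, $$\log\frac{(1-\sigma/m)^2+1/m^2}{1+\sigma^2}\ \le\ 2\Xi\ \le\ \log\Big((1+\sigma/m)^2+\frac1{m^2}\Big).$$ In particular $\Xi\ge-\log 2$, i.e. $L(\epsilon;E)\ge\int_{\mathbb{T}}\log|E-v(x+i\epsilon)|dx-\log2$.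
   Context: $\mathbb{T}=\mathbb{R}/\mathbb{Z}$; $B^E(z)=\begin{pmatrix}E-v(z)&-1\\1&0\end{pmatrix}$, $B^E_n(z)=B^E(z+(n-1)\alpha)\cdots B^E(z)$; $L(\epsilon;E)=\lim_{n}\frac1n\int_{\mathbb{T}}\log\|B^E_n(x+i\epsilon)\|dx$. Uniform hyperbolicity of an $SL(2,\mathbb{C})$ cocycle means existence of a continuous invariant splitting $\mathbb{C}^2=E^u(x)\oplus E^s(x)$ with uniform exponential expansion on $E^u$ and contraction on $E^s$. *)

(* Defs.v *)
From Stdlib Require Import Reals Lra ClassicalEpsilon.
Open Scope R_scope.

Definition Cplx : Type := (R * R)%type.
Definition Re (z : Cplx) : R := fst z.
Definition Im (z : Cplx) : R := snd z.
Definition RtoC (x : R) : Cplx := (x, 0).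
Definition Cadd (z w : Cplx) : Cplx := (Re z + Re w, Im z + Im w).
Definition Copp (z : Cplx) : Cplx := (- Re z, - Im z).
Definition Csub (z w : Cplx) : Cplx := Cadd z (Copp w).
Definition Cmul (z w : Cplx) : Cplx :=
  (Re z * Re w - Im z * Im w, Re z * Im w + Im z * Re w).
Definition Cabs (z : Cplx) : R := sqrt (Re z ^ 2 + Im z ^ 2).
Definition Cinv (z : Cplx) : Cplx :=
  (Re z / (Re z ^ 2 + Im z ^ 2), - Im z / (Re z ^ 2 + Im z ^ 2)).
Definition Cdiv (z w : Cplx) : Cplx := Cmul z (Cinv w).
Definition mkC (x y : R) : Cplx := (x, y).

Definition in_strip (h : R) (z : Cplx) : Prop := Rabs (Im z) < h.

Definition C_differentiable_at (f : Cplx -> Cplx) (z : Cplx) : Prop :=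
  exists l : Cplx, forall eps, 0 < eps -> exists delta, 0 < delta /\
    forall w : Cplx, w <> z -> Cabs (Csub w z) < delta ->
      Cabs (Csub (Cdiv (Csub (f w) (f z)) (Csub w z)) l) < eps.

Definition holomorphic_on_strip (h : R) (f : Cplx -> Cplx) : Prop :=
  forall z, in_strip h z -> C_differentiable_at f z.

(* v : T -> R real-analytic, given through its holomorphic extension to a
   strip |Im z| < h (h > 0), 1-periodic and real on the real axis. *)
Definition real_analytic_on_T (h : R) (v : Cplx -> Cplx) : Prop :=
  0 < h /\ holomorphic_on_strip h v /\
  (forall z, in_strip h z -> v (Cadd z (RtoC 1)) = v z) /\
  (forall x : R, Im (v (RtoC x)) = 0).

Definition irrational (a : R) : Prop :=
  forall (p q : Z), q <> 0%Z -> a * IZR q <> IZR p.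

Definition C2 : Type := (Cplx * Cplx)%type.
Definition vnorm (u : C2) : R := sqrt (Cabs (fst u) ^ 2 + Cabs (snd u) ^ 2).
Definition vscale (c : Cplx) (u : C2) : C2 := (Cmul c (fst u), Cmul c (snd u)).

(* matrix ((a, b), (c, d)) = [[a, b], [c, d]] *)
Definition M2 : Type := ((Cplx * Cplx) * (Cplx * Cplx))%type.
Definition mk2 (a b c d : Cplx) : M2 := ((a, b), (c, d)).
Definition mapply (A : M2) (u : C2) : C2 :=
  let '((a, b), (c, d)) := A in
  (Cadd (Cmul a (fst u)) (Cmul b (snd u)),
   Cadd (Cmul c (fst u)) (Cmul d (snd u))).
Definition mmul (A B : M2) : M2 :=
  let '((a, b), (c, d)) := A in
  let '((a', b'), (c', d')) := B in
  mk2 (Cadd (Cmul a a') (Cmul b c')) (Cadd (Cmul a b') (Cmul b d'))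
      (Cadd (Cmul c a') (Cmul d c')) (Cadd (Cmul c b') (Cmul d d')).
Definition mid : M2 := mk2 (RtoC 1) (RtoC 0) (RtoC 0) (RtoC 1).

Definition opnorm (A : M2) : R :=
  epsilon (inhabits 0)
    (fun r => is_lub (fun t => exists u : C2, vnorm u = 1 /\ t = vnorm (mapply A u)) r).

Fixpoint cocycle_iter (alpha : R) (A : R -> M2) (n : nat) (x : R) : M2 :=
  match n with
  | O => mid
  | S k => mmul (A (x + INR k * alpha)) (cocycle_iter alpha A k x)
  end.

Definition span (u : C2) (w : C2) : Prop := exists c : Cplx, w = vscale c u.

Definition C2_continuous (f : R -> C2) : Prop :=
  forall x eps, 0 < eps -> exists delta, 0 < delta /\
    forall y, Rabs (y - x) < delta ->
      vnorm (Cadd (fst (f y)) (Copp (fst (f x))), Cadd (snd (f y)) (Copp (snd (f x))))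
      < eps.


(* A continuous invariant splitting Cplx^2 = E^u(x) (+) E^s(x) into lines is
   given by continuous nonvanishing spanning vector fields eu, es on R
   (the lines are required to be 1-periodic; since R is contractible every
   continuous line field on R admits such a spanning field). *)
Definition uniformly_hyperbolic (alpha : R) (A : R -> M2) : Prop :=
  exists (eu es : R -> C2) (K lam : R),
    C2_continuous eu /\ C2_continuous es /\
    (forall x, eu x <> (RtoC 0, RtoC 0) /\ es x <> (RtoC 0, RtoC 0)) /\
    (forall x, Csub (Cmul (fst (eu x)) (snd (es x))) (Cmul (snd (eu x)) (fst (es x)))
               <> RtoC 0) /\
    (* well defined on T *)
    (forall x, span (eu x) (eu (x + 1)) /\ span (es x) (es (x + 1))) /\
    (forall x, span (eu (x + alpha)) (mapply (A x) (eu x)) /\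
               span (es (x + alpha)) (mapply (A x) (es x))) /\
    0 < K /\ 1 < lam /\
    (forall x n w, span (eu x) w ->
        vnorm (mapply (cocycle_iter alpha A n x) w) >= / K * lam ^ n * vnorm w) /\
    (forall x n w, span (es x) w ->
        vnorm (mapply (cocycle_iter alpha A n x) w) <= K * / lam ^ n * vnorm w).

Definition BE (v : Cplx -> Cplx) (E : R) (z : Cplx) : M2 :=
  mk2 (Csub (RtoC E) (v z)) (RtoC (-1)) (RtoC 1) (RtoC 0).

Definition Bshift (v : Cplx -> Cplx) (E eps : R) (x : R) : M2 := BE v E (mkC x eps).

(* integral over T = [0,1] (Riemann integral; value for integrable f) *)
Definition integral01 (f : R -> R) : R :=
  epsilon (inhabits 0)
    (fun I => exists pr : Riemann_integrable f 0 1, RiemannInt pr = I).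

Definition minimum (f : R -> R) : R :=
  epsilon (inhabits 0) (fun r => (exists x, f x = r) /\ forall x, r <= f x).

Definition m_val (v : Cplx -> Cplx) (E eps : R) : R :=
  minimum (fun x => Cabs (Csub (RtoC E) (v (mkC x eps)))).

Definition L_seq (v : Cplx -> Cplx) (alpha E eps : R) (n : nat) : R :=
  / INR n * integral01 (fun x => ln (opnorm (cocycle_iter alpha (Bshift v E eps) n x))).

(* Main.v *)
Require Import Defs.
From Stdlib Require Import Reals Lra Lia ClassicalEpsilon ZArith.
From Coquelicot Require Import Rcomplements Hierarchy Continuity RInt ElemFct.
Open Scope R_scope.


Lemma Ceq (z w : Cplx) : Re z = Re w -> Im z = Im w -> z = w.
Proof. destruct z, w; unfold Re, Im; simpl; intros; subst; reflexivity. Qed.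

Lemma Cabs_ge0 z : 0 <= Cabs z.
Proof. unfold Cabs; apply sqrt_pos. Qed.

Lemma Cabs_sq z : Cabs z ^ 2 = Re z ^ 2 + Im z ^ 2.
Proof. unfold Cabs. rewrite <- Rsqr_pow2, Rsqr_sqrt; [ring|nra]. Qed.

Lemma sqrt_le_sq a b : 0 <= b -> a <= b ^ 2 -> sqrt a <= b.
Proof. intros Hb H. rewrite <- (sqrt_pow2 b Hb). apply sqrt_le_1_alt. exact H. Qed.

Lemma le_sqrt_sq a b : 0 <= b -> b ^ 2 <= a -> b <= sqrt a.
Proof. intros Hb H. rewrite <- (sqrt_pow2 b Hb). apply sqrt_le_1_alt. exact H. Qed.

Lemma Cabs_mul z w : Cabs (Cmul z w) = Cabs z * Cabs w.
Proof.
  unfold Cabs, Cmul, Re, Im; simpl. rewrite <- sqrt_mult by nra.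
  f_equal; ring.
Qed.

Lemma Cabs_Re z : Rabs (Re z) <= Cabs z.
Proof.
  apply le_sqrt_sq; [apply Rabs_pos|]. rewrite <- Rsqr_pow2, <- Rsqr_abs, Rsqr_pow2. nra.
Qed.
Lemma Cabs_Im z : Rabs (Im z) <= Cabs z.
Proof.
  apply le_sqrt_sq; [apply Rabs_pos|]. rewrite <- Rsqr_pow2, <- Rsqr_abs, Rsqr_pow2. nra.
Qed.
Lemma Cabs_le_sum z : Cabs z <= Rabs (Re z) + Rabs (Im z).
Proof.
  apply sqrt_le_sq. generalize (Rabs_pos (Re z)) (Rabs_pos (Im z)); lra.
  rewrite <- (Rsqr_pow2 (Re z)), <- (Rsqr_pow2 (Im z)), (Rsqr_abs (Re z)), (Rsqr_abs (Im z)).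
  unfold Rsqr. generalize (Rabs_pos (Re z)) (Rabs_pos (Im z)); nra.
Qed.

Lemma sqrt2_le a b : 0 <= a -> 0 <= b -> sqrt (a ^ 2 + b ^ 2) <= a + b.
Proof. intros; apply sqrt_le_sq; nra. Qed.

Lemma Cabs_tri z w : Cabs (Cadd z w) <= Cabs z + Cabs w.
Proof.
  apply sqrt_le_sq. generalize (Cabs_ge0 z) (Cabs_ge0 w); lra.
  assert (E1 : Re (Cadd z w) = Re z + Re w) by reflexivity.
  assert (E2 : Im (Cadd z w) = Im z + Im w) by reflexivity.
  rewrite E1, E2.
  assert (H1 := Cabs_sq z). assert (H2 := Cabs_sq w).
  assert (Hz := Cabs_ge0 z). assert (Hw := Cabs_ge0 w).
  assert (Re z * Re w + Im z * Im w <= Cabs z * Cabs w).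
  { assert ((Re z * Re w + Im z * Im w)^2 <= (Cabs z * Cabs w)^2).
    { replace ((Cabs z * Cabs w)^2) with (Cabs z^2 * Cabs w^2) by ring.
      rewrite H1, H2. assert (0 <= (Re z * Im w - Im z * Re w)^2) by (apply pow2_ge_0). nra. }
    destruct (Rle_or_lt (Re z * Re w + Im z * Im w) (Cabs z * Cabs w)) as [|Hlt]; auto.
    assert (0 <= Cabs z * Cabs w) by (apply Rmult_le_pos; auto). nra. }
  nra.
Qed.

Lemma Cabs_opp z : Cabs (Copp z) = Cabs z.
Proof. unfold Cabs, Copp, Re, Im; simpl. f_equal; ring. Qed.

Lemma Cabs_sub_le z w : Cabs (Csub z w) <= Cabs z + Cabs w.
Proof. unfold Csub. rewrite <- (Cabs_opp w). apply Cabs_tri. Qed.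

Lemma Cabs_sub_ge z w : Cabs z - Cabs w <= Cabs (Csub z w).
Proof.
  assert (z = Cadd (Csub z w) w) as Hz.
  { apply Ceq; unfold Csub, Cadd, Copp, Re, Im; simpl; ring. }
  assert (H := Cabs_tri (Csub z w) w). rewrite <- Hz in H. lra.
Qed.

Lemma Cabs_sub_sym z w : Cabs (Csub z w) = Cabs (Csub w z).
Proof. unfold Cabs, Csub, Cadd, Copp, Re, Im; simpl; f_equal; ring. Qed.

Lemma Cabs_RtoC x : Cabs (RtoC x) = Rabs x.
Proof. unfold Cabs, RtoC, Re, Im; simpl. rewrite <- sqrt_Rsqr_abs. f_equal. unfold Rsqr; ring. Qed.

Lemma Cabs_pos z : 0 < Cabs z -> 0 < Re z ^ 2 + Im z ^ 2.
Proof. intros H. rewrite <- Cabs_sq. nra. Qed.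

Lemma Cinv_mul z : 0 < Cabs z -> Cmul (Cinv z) z = RtoC 1.
Proof.
  intros H. apply Cabs_pos in H. destruct z as [a b]; unfold Re, Im in *; simpl in *.
  apply Ceq; unfold Cmul, Cinv, RtoC, Re, Im; simpl; field; lra.
Qed.

Lemma Cabs_inv z : 0 < Cabs z -> Cabs (Cinv z) = / Cabs z.
Proof.
  intros H. assert (Hm := Cabs_mul (Cinv z) z). rewrite Cinv_mul in Hm by exact H.
  rewrite Cabs_RtoC, Rabs_R1 in Hm. field_simplify_eq; [|lra]. lra.
Qed.

Lemma Cabs_zero_iff z : Cabs z = 0 -> z = RtoC 0.
Proof.
  intros H. assert (H2 := Cabs_sq z). rewrite H in H2.
  destruct z as [a b]; unfold Re, Im in *; simpl in *.
  apply Ceq; unfold RtoC, Re, Im; simpl; nra.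
Qed.

Lemma Cinv_sub z w : 0 < Cabs z -> 0 < Cabs w ->
  Cabs (Csub (Cinv z) (Cinv w)) = Cabs (Csub z w) / (Cabs z * Cabs w).
Proof.
  intros Hz Hw.
  assert (Csub (Cinv z) (Cinv w) = Cmul (Cmul (Cinv z) (Cinv w)) (Csub w z)) as E.
  { apply Cabs_pos in Hz; apply Cabs_pos in Hw.
    destruct z as [a b], w as [c d]; unfold Re, Im in *; simpl in *.
    apply Ceq; unfold Cmul, Cinv, Csub, Cadd, Copp, Re, Im; simpl; field; lra. }
  rewrite E, !Cabs_mul, !Cabs_inv by lra. rewrite Cabs_sub_sym. field; lra.
Qed.

Lemma pow_small k y : 0 <= k < 1 -> 0 < y -> exists N, k ^ N < y.
Proof.
  intros Hk Hy. destruct (pow_lt_1_zero k) with y as [N HN]; [rewrite Rabs_right; lra|lra|].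
  exists N. specialize (HN N (le_n N)). rewrite Rabs_right in HN; auto.
  apply Rle_ge, pow_le; lra.
Qed.

Lemma small_zero z D k : 0 <= k < 1 -> (forall n, z <= D * k ^ n) -> z <= 0.
Proof.
  intros Hk H. destruct (Rle_or_lt z 0) as [|Hz]; auto.
  destruct (pow_small k (z / (Rabs D + 1)) Hk) as [N HN].
  { apply Rdiv_lt_0_compat; [lra|generalize (Rabs_pos D); lra]. }
  specialize (H N). assert (0 <= k ^ N) by (apply pow_le; lra).
  assert (D * k ^ N <= Rabs D * k ^ N) by (apply Rmult_le_compat_r; auto; apply RRle_abs).
  assert (Rabs D * k ^ N <= Rabs D * (z / (Rabs D + 1))) by
    (apply Rmult_le_compat_l; [apply Rabs_pos|lra]).
  assert (Rabs D * (z / (Rabs D + 1)) < z).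
  { assert (0 <= Rabs D) by apply Rabs_pos.
    unfold Rdiv. replace (Rabs D * (z * / (Rabs D + 1))) with (z * (Rabs D / (Rabs D + 1))) by (field; lra).
    assert (Rabs D / (Rabs D + 1) < 1) by (apply Rmult_lt_reg_r with (Rabs D + 1); [lra|]; field_simplify; lra).
    nra. }
  lra.
Qed.

Lemma geom_lim (u : nat -> R) C k : 0 <= k < 1 ->
  (forall n, Rabs (u (S n) - u n) <= C * k ^ n) ->
  exists l, forall n, Rabs (u n - l) <= C * k ^ n / (1 - k).
Proof.
  intros Hk H.
  assert (HC : 0 <= C) by (specialize (H 0%nat); simpl in H; generalize (Rabs_pos (u 1%nat - u 0%nat)); lra).
  assert (Hj : forall n j, Rabs (u (n + j)%nat - u n) <= C * k ^ n * (1 - k ^ j) / (1 - k)).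
  { intros n j; induction j.
    - rewrite Nat.add_0_r. unfold Rminus; rewrite Rplus_opp_r, Rabs_R0. simpl.
      replace (C * k ^ n * (1 - 1) / (1 - k)) with 0 by (field; lra). lra.
    - replace (n + S j)%nat with (S (n + j)) by lia.
      replace (u (S (n+j)) - u n) with ((u (S (n+j)) - u (n+j)%nat) + (u (n+j)%nat - u n)) by ring.
      eapply Rle_trans; [apply Rabs_triang|].
      specialize (H (n+j)%nat). rewrite pow_add in H.
      replace (C * k ^ n * (1 - k ^ S j) / (1 - k)) with (C * (k ^ n * k ^ j) + C * k ^ n * (1 - k ^ j) / (1 - k))
        by (simpl; field; lra).
      lra. }
  assert (Hb : forall n p, (n <= p)%nat -> Rabs (u p - u n) <= C * k ^ n / (1 - k)).
  { intros n p Hnp. replace p with (n + (p - n))%nat by lia.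
    eapply Rle_trans; [apply Hj|]. unfold Rdiv. apply Rmult_le_compat_r.
    - apply Rlt_le, Rinv_0_lt_compat; lra.
    - assert (0 <= k ^ (p - n)) by (apply pow_le; lra). assert (0 <= k^n) by (apply pow_le; lra).
      assert (0 <= C * k^n) by (apply Rmult_le_pos; lra). nra. }
  assert (Hc : Cauchy_crit u).
  { intros e He.
    destruct (pow_small k (e * (1 - k) / (2 * (C + 1))) Hk) as [N HN].
    { apply Rdiv_lt_0_compat; nra. }
    exists N. intros n p Hn Hp. unfold R_dist.
    replace (u n - u p) with ((u n - u N) - (u p - u N)) by ring.
    eapply Rle_lt_trans; [apply Rabs_triang|]. rewrite Rabs_Ropp.
    assert (C * k ^ N / (1 - k) < e / 2).
    { apply Rmult_lt_reg_r with (1 - k); [lra|]. unfold Rdiv. rewrite Rmult_assoc, Rinv_l by lra.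
      assert (0 <= k ^ N) by (apply pow_le; lra).
      assert (C * k ^ N <= (C + 1) * k ^ N) by nra.
      assert ((C+1) * k ^ N < (C+1) * (e * (1 - k) / (2 * (C + 1)))) by (apply Rmult_lt_compat_l; lra).
      replace ((C+1) * (e * (1 - k) / (2 * (C + 1)))) with (e * / 2 * (1 - k)) in H2 by (field; lra). lra. }
    generalize (Hb N n Hn) (Hb N p Hp). lra. }
  destruct (Rcomplete.R_complete u Hc) as [l Hl]. exists l. intros n.
  destruct (Rle_or_lt (Rabs (u n - l)) (C * k ^ n / (1 - k))) as [|Hlt]; auto.
  exfalso. destruct (Hl (Rabs (u n - l) - C * k ^ n / (1 - k))) as [N HN]; [lra|].
  specialize (HN (n + N)%nat ltac:(lia)). unfold R_dist in HN.
  specialize (Hb n (n + N)%nat ltac:(lia)).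
  assert (Rabs (u n - l) <= Rabs (u (n+N)%nat - u n) + Rabs (u (n + N)%nat - l)).
  { replace (u n - l) with (- (u (n+N)%nat - u n) + (u (n+N)%nat - l)) by ring.
    eapply Rle_trans; [apply Rabs_triang|]. rewrite Rabs_Ropp. lra. }
  lra.
Qed.

Lemma unif_cont (F : nat -> R -> R) G D k : 0 <= k < 1 ->
  (forall n x, continuity_pt (F n) x) -> (forall n x, Rabs (F n x - G x) <= D * k ^ n) ->
  forall x, continuity_pt G x.
Proof.
  intros Hk HF HG x.
  assert (HD : 0 <= D) by (specialize (HG 0%nat x); simpl in HG; generalize (Rabs_pos (F 0%nat x - G x)); lra).
  intros e He.
  destruct (pow_small k (e / 3 / (D + 1)) Hk) as [N HN]. { apply Rdiv_lt_0_compat; lra. }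
  assert (HDN : D * k ^ N < e / 3).
  { assert (0 <= k ^ N) by (apply pow_le; lra).
    assert (D * k ^ N <= (D + 1) * k ^ N) by nra.
    assert ((D+1) * k ^ N < (D+1) * (e / 3 / (D + 1))) by (apply Rmult_lt_compat_l; lra).
    replace ((D+1) * (e / 3 / (D + 1))) with (e/3) in H1 by (field; lra). lra. }
  destruct (HF N x (e/3)) as [d [Hd Hc]]; [lra|].
  exists d; split; auto. intros y [Hxy Hy]. specialize (Hc y (conj Hxy Hy)).
  simpl in *. unfold R_dist in *.
  generalize (HG N x) (HG N y); intros H1 H2.
  replace (G y - G x) with (- (F N y - G y) + (F N y - F N x) + (F N x - G x)) by ring.
  eapply Rle_lt_trans; [eapply Rle_trans; [apply Rabs_triang|]|].
  { apply Rplus_le_compat_r. apply Rabs_triang. }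
  rewrite Rabs_Ropp. lra.
Qed.

Lemma cont_id x : continuity_pt (fun y => y) x.
Proof. apply derivable_continuous_pt, derivable_pt_id. Qed.

Lemma cont_sq (f : R -> R) x : continuity_pt f x -> continuity_pt (fun y => f y ^ 2) x.
Proof.
  intros H. apply continuity_pt_ext with (fun y => f y * f y); [intros; ring|].
  apply (continuity_pt_mult f f); auto.
Qed.

Ltac creg :=
  match goal with
  | |- continuity_pt (fun y => @?A y + @?B y) ?x => apply (continuity_pt_plus A B); creg
  | |- continuity_pt (fun y => @?A y - @?B y) ?x => apply (continuity_pt_minus A B); creg
  | |- continuity_pt (fun y => @?A y * @?B y) ?x => apply (continuity_pt_mult A B); creg
  | |- continuity_pt (fun y => - @?A y) ?x => apply (continuity_pt_opp A); creg
  | |- continuity_pt (fun y => @?A y / @?B y) ?x => apply (continuity_pt_div A B); [creg|creg|]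
  | |- continuity_pt (fun y => @?A y ^ 2) ?x => apply (cont_sq A); creg
  | |- continuity_pt (fun y => ?c) ?x => apply continuity_pt_const; intros ? ?; reflexivity
  | |- continuity_pt (fun y => y) ?x => apply cont_id
  | _ => try assumption
  end.

Definition Ccont (f : R -> Cplx) : Prop :=
  forall x, continuity_pt (fun y => Re (f y)) x /\ continuity_pt (fun y => Im (f y)) x.

Lemma Ccont_const c : Ccont (fun _ => c).
Proof. intros x; split; creg. Qed.

Lemma Ccont_add f g : Ccont f -> Ccont g -> Ccont (fun x => Cadd (f x) (g x)).
Proof.
  intros Hf Hg x; destruct (Hf x), (Hg x); unfold Cadd, Re, Im in *; cbn [fst snd] in *; split; creg.
Qed.

Lemma Ccont_opp f : Ccont f -> Ccont (fun x => Copp (f x)).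
Proof.
  intros Hf x; destruct (Hf x); unfold Copp, Re, Im in *; cbn [fst snd] in *; split; creg.
Qed.

Lemma Ccont_sub f g : Ccont f -> Ccont g -> Ccont (fun x => Csub (f x) (g x)).
Proof. intros; unfold Csub; apply Ccont_add; auto; apply Ccont_opp; auto. Qed.

Lemma Ccont_mul f g : Ccont f -> Ccont g -> Ccont (fun x => Cmul (f x) (g x)).
Proof.
  intros Hf Hg x; destruct (Hf x), (Hg x); unfold Cmul, Re, Im in *; cbn [fst snd] in *; split; creg.
Qed.

Lemma Cabs_pos' z : 0 < Cabs z -> 0 < Re z ^ 2 + Im z ^ 2.
Proof. intros H. unfold Cabs in H. destruct (Rle_or_lt (Re z ^ 2 + Im z ^ 2) 0); auto. rewrite sqrt_neg_0 in H; lra. Qed.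

Lemma Ccont_inv f : Ccont f -> (forall x, 0 < Cabs (f x)) -> Ccont (fun x => Cinv (f x)).
Proof.
  intros Hf Hp x; destruct (Hf x). assert (Hq := Cabs_pos' (f x) (Hp x)).
  unfold Cinv, Re, Im in *; cbn [fst snd] in *; split; creg; lra.
Qed.

Lemma cont_shift (F : R -> R) c x : continuity_pt F (x + c) -> continuity_pt (fun y => F (y + c)) x.
Proof.
  intros H. apply (continuity_pt_comp (fun y => y + c) F); [creg|exact H].
Qed.

Lemma Ccont_shift f c : Ccont f -> Ccont (fun x => f (x + c)).
Proof. intros Hf x; destruct (Hf (x + c)); split; apply (cont_shift (fun y => Re (f y))) || apply (cont_shift (fun y => Im (f y))); auto. Qed.

Lemma cont_sqrt (F : R -> R) x : continuity_pt F x -> 0 <= F x -> continuity_pt (fun y => sqrt (F y)) x.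
Proof. intros H Hp. apply (continuity_pt_comp F sqrt); auto. apply continuity_pt_sqrt; auto. Qed.

Lemma cont_Cabs f : Ccont f -> forall x, continuity_pt (fun y => Cabs (f y)) x.
Proof.
  intros Hf x. destruct (Hf x). unfold Cabs. apply (cont_sqrt (fun y => Re (f y) ^ 2 + Im (f y) ^ 2)).
  creg. apply Rplus_le_le_0_compat; apply pow2_ge_0.
Qed.

Lemma cont_ln (F : R -> R) x : continuity_pt F x -> 0 < F x -> continuity_pt (fun y => ln (F y)) x.
Proof.
  intros H Hp. apply (continuity_pt_comp F ln); auto.
  apply continuity_pt_filterlim. apply continuous_ln; auto.
Qed.

Lemma Cabs_sub_tri a b c : Cabs (Csub a c) <= Cabs (Csub a b) + Cabs (Csub b c).
Proof.
  replace (Csub a c) with (Cadd (Csub a b) (Csub b c)) by (apply Ceq; unfold Csub, Cadd, Copp, Re, Im; simpl; ring).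
  apply Cabs_tri.
Qed.

Lemma Cabs_sub_zero z w : Cabs (Csub z w) <= 0 -> z = w.
Proof.
  intros H. assert (Cabs (Csub z w) = 0) by (generalize (Cabs_ge0 (Csub z w)); lra).
  apply Cabs_zero_iff in H0. destruct z, w. unfold Csub, Cadd, Copp, RtoC, Re, Im in H0; simpl in H0.
  injection H0; intros. f_equal; lra.
Qed.

Lemma Cabs_sub0 z : Cabs (Csub z (RtoC 0)) = Cabs z.
Proof. f_equal. apply Ceq; unfold Csub, Cadd, Copp, RtoC, Re, Im; simpl; ring. Qed.

Definition Tmap (g : R -> Cplx) (beta : R) (f : R -> Cplx) : R -> Cplx :=
  fun x => Cinv (Csub (g x) (f (x + beta))).

Fixpoint Titer g beta (n : nat) : R -> Cplx :=
  match n with O => fun _ => RtoC 0 | S k => Tmap g beta (Titer g beta k) end.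

Section FP.
Variables (g : R -> Cplx) (beta m : R).
Hypothesis Hm : 2 < m.
Hypothesis Hg : Ccont g.
Hypothesis Hgm : forall x, m <= Cabs (g x).
Hypothesis Hgp : forall x, g (x + 1) = g x.

Let q := / (m - 1).
Let lam := m - q.

Lemma q_facts : 0 < q < 1 /\ 1 <= q * lam /\ 1 < lam.
Proof.
  unfold lam, q. split; [split|split].
  - apply Rinv_0_lt_compat; lra.
  - rewrite <- Rinv_1. apply Rinv_lt_contravar; lra.
  - apply Rmult_le_reg_l with (m - 1); [lra|]. field_simplify; [|lra].
    apply Rmult_le_reg_r with (m - 1); [lra|]. field_simplify; [|lra]. nra.
  - assert (/ (m - 1) < 1) by (rewrite <- Rinv_1; apply Rinv_lt_contravar; lra). lra.
Qed.

Lemma den_bound (f : R -> Cplx) x : (forall y, Cabs (f y) <= q) -> lam <= Cabs (Csub (g x) (f (x + beta))).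
Proof.
  intros Hf. eapply Rle_trans; [|apply Cabs_sub_ge]. generalize (Hgm x) (Hf (x + beta)). unfold lam; lra.
Qed.

Lemma T_bound (f : R -> Cplx) x : (forall y, Cabs (f y) <= q) -> Cabs (Tmap g beta f x) <= q.
Proof.
  intros Hf. destruct q_facts as [[Hq0 Hq1] [Hql Hl]]. unfold Tmap.
  assert (Hd := den_bound f x Hf).
  rewrite Cabs_inv by lra.
  apply Rmult_le_reg_l with (Cabs (Csub (g x) (f (x + beta)))); [lra|].
  rewrite Rinv_r by lra. nra.
Qed.

Lemma T_lip (f1 f2 : R -> Cplx) x : (forall y, Cabs (f1 y) <= q) -> (forall y, Cabs (f2 y) <= q) ->
  Cabs (Csub (Tmap g beta f1 x) (Tmap g beta f2 x)) <= q ^ 2 * Cabs (Csub (f1 (x + beta)) (f2 (x + beta))).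
Proof.
  intros H1 H2. destruct q_facts as [[Hq0 Hq1] [Hql Hl]]. unfold Tmap.
  assert (D1 := den_bound f1 x H1). assert (D2 := den_bound f2 x H2).
  rewrite Cinv_sub by lra.
  replace (Csub (Csub (g x) (f1 (x + beta))) (Csub (g x) (f2 (x + beta)))) with
    (Csub (f2 (x + beta)) (f1 (x + beta))) by (apply Ceq; unfold Csub, Cadd, Copp, Re, Im; simpl; ring).
  rewrite Cabs_sub_sym.
  set (c := Cabs (Csub (f1 (x + beta)) (f2 (x + beta)))).
  assert (0 <= c) by apply Cabs_ge0.
  set (d1 := Cabs (Csub (g x) (f1 (x + beta)))) in *. set (d2 := Cabs (Csub (g x) (f2 (x + beta)))) in *.
  unfold Rdiv. apply Rmult_le_reg_r with (d1 * d2); [nra|].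
  rewrite Rmult_assoc, Rinv_l by nra.
  assert (1 <= q * d1) by nra. assert (1 <= q * d2) by nra.
  assert (1 <= (q * d1) * (q * d2)) by nra. nra.
Qed.

Lemma Titer_props n : Ccont (Titer g beta n) /\ (forall y, Cabs (Titer g beta n y) <= q) /\
  (forall y, Titer g beta n (y + 1) = Titer g beta n y).
Proof.
  destruct q_facts as [[Hq0 Hq1] [Hql Hl]].
  induction n as [|n [Hc [Hb Hp]]]; simpl.
  - split; [apply Ccont_const|split; [|reflexivity]]. intros; rewrite Cabs_RtoC, Rabs_R0; lra.
  - split; [|split].
    + unfold Tmap. apply Ccont_inv.
      * apply Ccont_sub; auto. apply Ccont_shift; auto.
      * intros x; generalize (den_bound _ x Hb); lra.
    + intros y; apply T_bound; auto.
    + intros y; unfold Tmap. rewrite Hgp. replace (y + 1 + beta) with ((y + beta) + 1) by ring. rewrite Hp. reflexivity.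
Qed.

Lemma Titer_incr n x : Cabs (Csub (Titer g beta (S n) x) (Titer g beta n x)) <= q * (q ^ 2) ^ n.
Proof.
  destruct q_facts as [[Hq0 Hq1] [Hql Hl]].
  revert x; induction n; intros x.
  - simpl. rewrite Cabs_sub0. rewrite Rmult_1_r. apply T_bound. intros; rewrite Cabs_RtoC, Rabs_R0; lra.
  - change (Cabs (Csub (Tmap g beta (Titer g beta (S n)) x) (Tmap g beta (Titer g beta n) x)) <= q * (q ^ 2) ^ S n).
    eapply Rle_trans; [apply T_lip; apply Titer_props|].
    specialize (IHn (x + beta)).
    replace (q * (q^2)^S n) with (q^2 * (q * (q^2)^n)) by (simpl; ring).
    apply Rmult_le_compat_l; [nra|exact IHn].
Qed.

Theorem fixed_point : exists s : R -> Cplx, Ccont s /\ (forall x, Cabs (s x) <= q) /\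
  (forall x, s (x + 1) = s x) /\ (forall x, s x = Cinv (Csub (g x) (s (x + beta)))).
Proof.
  destruct q_facts as [[Hq0 Hq1] [Hql Hl]].
  set (k := q ^ 2). assert (Hk : 0 <= k < 1) by (unfold k; split; nra).
  set (D := q / (1 - k)). assert (HD : 0 <= D) by (unfold D; apply Rlt_le, Rdiv_lt_0_compat; lra).
  set (it := Titer g beta).
  assert (HRe : forall x, exists l, forall n, Rabs (Re (it n x) - l) <= q * k ^ n / (1 - k)).
  { intros x. apply geom_lim; auto. intros n. eapply Rle_trans; [|apply (Titer_incr n x)].
    change (Re (it (S n) x) - Re (it n x)) with (Re (Csub (it (S n) x) (it n x))). apply Cabs_Re. }
  assert (HIm : forall x, exists l, forall n, Rabs (Im (it n x) - l) <= q * k ^ n / (1 - k)).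
  { intros x. apply geom_lim; auto. intros n. eapply Rle_trans; [|apply (Titer_incr n x)].
    change (Im (it (S n) x) - Im (it n x)) with (Im (Csub (it (S n) x) (it n x))). apply Cabs_Im. }
  set (sr := fun x => epsilon (inhabits 0) (fun l => forall n, Rabs (Re (it n x) - l) <= q * k ^ n / (1 - k))).
  set (si := fun x => epsilon (inhabits 0) (fun l => forall n, Rabs (Im (it n x) - l) <= q * k ^ n / (1 - k))).
  assert (Hsr : forall x n, Rabs (Re (it n x) - sr x) <= D * k ^ n).
  { intros x n. unfold sr. replace (D * k ^ n) with (q * k ^ n / (1 - k)) by (unfold D; field; lra).
    revert n. apply (epsilon_spec (inhabits 0) (fun l => forall n, Rabs (Re (it n x) - l) <= q * k ^ n / (1 - k))). apply HRe. }
  assert (Hsi : forall x n, Rabs (Im (it n x) - si x) <= D * k ^ n).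
  { intros x n. unfold si. replace (D * k ^ n) with (q * k ^ n / (1 - k)) by (unfold D; field; lra).
    revert n. apply (epsilon_spec (inhabits 0) (fun l => forall n, Rabs (Im (it n x) - l) <= q * k ^ n / (1 - k))). apply HIm. }
  set (s := fun x => mkC (sr x) (si x)).
  assert (Hs : forall n x, Cabs (Csub (it n x) (s x)) <= (2 * D) * k ^ n).
  { intros n x. eapply Rle_trans; [apply Cabs_le_sum|].
    change (Re (Csub (it n x) (s x))) with (Re (it n x) - sr x).
    change (Im (Csub (it n x) (s x))) with (Im (it n x) - si x).
    generalize (Hsr x n) (Hsi x n). lra. }
  assert (Hkn : forall n, 0 <= k ^ n) by (intros; apply pow_le; lra).
  assert (Hbnd : forall x, Cabs (s x) <= q).
  { intros x. assert (Cabs (s x) - q <= 0); [|lra].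
    apply (small_zero _ (2 * D) k Hk). intros n.
    assert (H1 := Cabs_sub_ge (s x) (it n x)). rewrite Cabs_sub_sym in H1.
    generalize (Hs n x) (proj1 (proj2 (Titer_props n)) x). fold it. lra. }
  exists s. split; [|split; [exact Hbnd|split]].
  - intros x. split.
    + apply (unif_cont (fun n y => Re (it n y)) sr D k Hk).
      * intros n y. apply (proj1 (Titer_props n) y).
      * exact (fun n y => Hsr y n).
    + apply (unif_cont (fun n y => Im (it n y)) si D k Hk).
      * intros n y. apply (proj1 (Titer_props n) y).
      * exact (fun n y => Hsi y n).
  - intros x. apply Cabs_sub_zero. apply (small_zero _ (4 * D) k Hk). intros n.
    eapply Rle_trans; [apply (Cabs_sub_tri _ (it n (x + 1)))|].
    rewrite Cabs_sub_sym. assert (E : it n (x+1) = it n x) by apply (proj2 (proj2 (Titer_props n)) x). 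
    generalize (Hs n (x + 1)) (Hs n x). rewrite E. assert (4 * D * k ^ n = 2 * (2 * D * k ^ n)) by ring. lra.
  - intros x. apply Cabs_sub_zero. apply (small_zero _ (4 * D) k Hk). intros n.
    eapply Rle_trans; [apply (Cabs_sub_tri _ (it (S n) x))|].
    rewrite Cabs_sub_sym.
    assert (H2 : Cabs (Csub (it (S n) x) (Cinv (Csub (g x) (s (x + beta))))) <= k * (2 * D * k ^ n)).
    { change (Cabs (Csub (Tmap g beta (it n) x) (Tmap g beta s x)) <= k * (2 * D * k ^ n)).
      eapply Rle_trans; [apply T_lip; [apply Titer_props|exact Hbnd]|].
      apply Rmult_le_compat_l; [unfold k; nra|]. apply Hs. }
    generalize (Hs (S n) x). simpl. fold k. intros H1. assert (0 <= 2*D*k^n) by (generalize (Hkn n); nra).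
    assert (k * (2 * D * k ^ n) <= 2 * D * k ^ n) by nra.
    assert (2 * D * (k * k ^ n) <= 2 * D * k ^ n) by nra.
    lra.
Qed.
End FP.

Definition C2add (p r : C2) : C2 := (Cadd (fst p) (fst r), Cadd (snd p) (snd r)).

Lemma vnorm_ge0 u : 0 <= vnorm u.
Proof. apply sqrt_pos. Qed.

Lemma vnorm_sq u : vnorm u ^ 2 = Cabs (fst u) ^ 2 + Cabs (snd u) ^ 2.
Proof. unfold vnorm. rewrite <- Rsqr_pow2, Rsqr_sqrt; [ring|nra]. Qed.

Lemma vnorm_le_sum u : vnorm u <= Cabs (fst u) + Cabs (snd u).
Proof. apply sqrt2_le; apply Cabs_ge0. Qed.

Lemma Cabs_fst_le u : Cabs (fst u) <= vnorm u.
Proof. apply le_sqrt_sq; [apply Cabs_ge0|]. generalize (pow2_ge_0 (Cabs (snd u))); lra. Qed.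
Lemma Cabs_snd_le u : Cabs (snd u) <= vnorm u.
Proof. apply le_sqrt_sq; [apply Cabs_ge0|]. generalize (pow2_ge_0 (Cabs (fst u))); lra. Qed.

Lemma vnorm_tri p r : vnorm (C2add p r) <= vnorm p + vnorm r.
Proof.
  unfold vnorm, C2add; cbn [fst snd].
  set (A := Cabs (fst p)); set (B := Cabs (snd p)); set (C := Cabs (fst r)); set (D := Cabs (snd r)).
  assert (0 <= A /\ 0 <= B /\ 0 <= C /\ 0 <= D) as [HA [HB [HC HD]]] by (repeat split; apply Cabs_ge0).
  assert (H1 := Cabs_tri (fst p) (fst r)). assert (H2 := Cabs_tri (snd p) (snd r)). fold A B C D in H1, H2.
  assert (0 <= Cabs (Cadd (fst p) (fst r))) by apply Cabs_ge0.
  assert (0 <= Cabs (Cadd (snd p) (snd r))) by apply Cabs_ge0.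
  eapply Rle_trans.
  { apply sqrt_le_1_alt. apply Rplus_le_compat; apply pow_incr; split; eauto. }
  assert (E : sqrt ((A + C) ^ 2 + (B + D) ^ 2) = Cabs (Cadd (A, B) (C, D))) by reflexivity.
  rewrite E. apply Cabs_tri.
Qed.

Lemma vnorm_scale c u : vnorm (vscale c u) = Cabs c * vnorm u.
Proof.
  unfold vnorm, vscale; cbn [fst snd]. rewrite !Cabs_mul.
  replace ((Cabs c * Cabs (fst u)) ^ 2 + (Cabs c * Cabs (snd u)) ^ 2) with
    (Cabs c ^ 2 * (Cabs (fst u) ^ 2 + Cabs (snd u) ^ 2)) by ring.
  rewrite sqrt_mult_alt by apply pow2_ge_0. rewrite sqrt_pow2 by apply Cabs_ge0. reflexivity.
Qed.

Definition ent11 (A : M2) := fst (fst A).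
Definition ent12 (A : M2) := snd (fst A).
Definition ent21 (A : M2) := fst (snd A).
Definition ent22 (A : M2) := snd (snd A).
Definition mnorm (A : M2) := Cabs (ent11 A) + Cabs (ent12 A) + Cabs (ent21 A) + Cabs (ent22 A).

Lemma mapply_eq A u : mapply A u =
  (Cadd (Cmul (ent11 A) (fst u)) (Cmul (ent12 A) (snd u)),
   Cadd (Cmul (ent21 A) (fst u)) (Cmul (ent22 A) (snd u))).
Proof. destruct A as [[a b] [c d]]; reflexivity. Qed.

Lemma mapply_bound A u : vnorm (mapply A u) <= mnorm A * vnorm u.
Proof.
  rewrite mapply_eq. eapply Rle_trans; [apply vnorm_le_sum|]. cbn [fst snd].
  assert (H1 := Cabs_fst_le u). assert (H2 := Cabs_snd_le u).
  assert (G := fun a b c d => Rle_trans _ _ _ (Cabs_tri (Cmul a b) (Cmul c d)) (Req_le _ _ (f_equal2 Rplus (Cabs_mul a b) (Cabs_mul c d)))).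
  generalize (G (ent11 A) (fst u) (ent12 A) (snd u)) (G (ent21 A) (fst u) (ent22 A) (snd u)).
  unfold mnorm.
  assert (0 <= Cabs (ent11 A) /\ 0 <= Cabs (ent12 A) /\ 0 <= Cabs (ent21 A) /\ 0 <= Cabs (ent22 A)) as [? [? [? ?]]]
    by (repeat split; apply Cabs_ge0).
  intros; nra.
Qed.

Definition Sset (A : M2) := fun t => exists u : C2, vnorm u = 1 /\ t = vnorm (mapply A u).

Lemma vnorm_e1 : vnorm (RtoC 1, RtoC 0) = 1.
Proof. unfold vnorm; cbn [fst snd]. rewrite !Cabs_RtoC, Rabs_R1, Rabs_R0. replace (1 ^ 2 + 0 ^ 2) with 1 by ring. apply sqrt_1. Qed.

Lemma opnorm_spec A : is_lub (Sset A) (opnorm A).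
Proof.
  unfold opnorm. apply (epsilon_spec (inhabits 0) (fun r => is_lub (Sset A) r)).
  destruct (completeness (Sset A)) as [l Hl].
  - exists (mnorm A). intros t [u [Hu ->]]. rewrite <- (Rmult_1_r (mnorm A)), <- Hu. apply mapply_bound.
  - exists (vnorm (mapply A (RtoC 1, RtoC 0))). exists (RtoC 1, RtoC 0). split; auto. apply vnorm_e1.
  - exists l; exact Hl.
Qed.

Lemma opnorm_ge A u : vnorm u = 1 -> vnorm (mapply A u) <= opnorm A.
Proof. intros Hu. apply (proj1 (opnorm_spec A)). exists u; auto. Qed.

Lemma opnorm_le A M : (forall u, vnorm u = 1 -> vnorm (mapply A u) <= M) -> opnorm A <= M.
Proof. intros H. apply (proj2 (opnorm_spec A)). intros t [u [Hu ->]]. auto. Qed.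

Definition Mdiff (A B : M2) : M2 :=
  mk2 (Csub (ent11 A) (ent11 B)) (Csub (ent12 A) (ent12 B)) (Csub (ent21 A) (ent21 B)) (Csub (ent22 A) (ent22 B)).

Lemma mapply_split A B u : mapply A u = C2add (mapply B u) (mapply (Mdiff A B) u).
Proof.
  rewrite !mapply_eq. unfold C2add, Mdiff, mk2, ent11, ent12, ent21, ent22; cbn [fst snd].
  f_equal; apply Ceq; unfold Csub, Cadd, Cmul, Copp, Re, Im; cbn [fst snd]; ring.
Qed.

Lemma opnorm_lip1 A B : opnorm A <= opnorm B + mnorm (Mdiff A B).
Proof.
  apply opnorm_le. intros u Hu. rewrite (mapply_split A B u).
  eapply Rle_trans; [apply vnorm_tri|]. apply Rplus_le_compat.
  - apply opnorm_ge; auto.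
  - rewrite <- (Rmult_1_r (mnorm _)), <- Hu. apply mapply_bound.
Qed.

Lemma mnorm_sym A B : mnorm (Mdiff A B) = mnorm (Mdiff B A).
Proof. unfold mnorm, Mdiff, mk2, ent11, ent12, ent21, ent22; cbn [fst snd]. rewrite !(Cabs_sub_sym (fst (fst A))), !(Cabs_sub_sym (snd (fst A))), !(Cabs_sub_sym (fst (snd A))), !(Cabs_sub_sym (snd (snd A))). reflexivity. Qed.

Lemma opnorm_lip A B : Rabs (opnorm A - opnorm B) <= mnorm (Mdiff A B).
Proof.
  generalize (opnorm_lip1 A B) (opnorm_lip1 B A). rewrite (mnorm_sym B A). intros; apply Rabs_le; lra.
Qed.

Lemma cont_dom (F h : R -> R) x : (forall y, Rabs (F y - F x) <= h y) -> continuity_pt h x -> h x = 0 ->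
  continuity_pt F x.
Proof.
  intros Hd Hh H0 e He. destruct (Hh e He) as [d [Hd0 Hc]]. exists d; split; auto.
  intros y Hy. specialize (Hc y Hy). simpl in *. unfold R_dist in *. rewrite H0 in Hc.
  eapply Rle_lt_trans; [apply Hd|]. eapply Rle_lt_trans; [|exact Hc]. rewrite Rminus_0_r. apply RRle_abs.
Qed.

Lemma Csub_self z : Csub z z = RtoC 0.
Proof. apply Ceq; unfold Csub, Cadd, Copp, RtoC, Re, Im; cbn [fst snd]; ring. Qed.

Lemma mnorm_self B : mnorm (Mdiff B B) = 0.
Proof.
  unfold mnorm, Mdiff, mk2, ent11, ent12, ent21, ent22; cbn [fst snd].
  rewrite !Csub_self, Cabs_RtoC, Rabs_R0. ring.
Qed.

Definition Mcont (A : R -> M2) : Prop :=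
  Ccont (fun x => ent11 (A x)) /\ Ccont (fun x => ent12 (A x)) /\ Ccont (fun x => ent21 (A x)) /\ Ccont (fun x => ent22 (A x)).

Lemma cont_opnorm (A : R -> M2) : Mcont A -> forall x, continuity_pt (fun y => opnorm (A y)) x.
Proof.
  intros [H1 [H2 [H3 H4]]] x.
  apply cont_dom with (h := fun y => mnorm (Mdiff (A y) (A x))).
  - intros y. apply opnorm_lip.
  - unfold mnorm, Mdiff, mk2, ent11, ent12, ent21, ent22 at 1; cbn [fst snd].
    repeat apply (continuity_pt_plus); apply (cont_Cabs (fun y => Csub _ _)); apply Ccont_sub; auto; apply Ccont_const.
  - apply mnorm_self.
Qed.

Lemma ex_cont (f : R -> R) a b : (forall x, continuity_pt f x) -> ex_RInt f a b.
Proof.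
  intros H. apply (@ex_RInt_continuous R_CompleteNormedModule). intros z _. apply continuity_pt_filterlim. apply H.
Qed.

Lemma int_eq (f : R -> R) : (forall x, continuity_pt f x) -> integral01 f = RInt f 0 1.
Proof.
  intros H. unfold integral01.
  assert (Hp := epsilon_spec (inhabits 0) (fun I => exists pr : Riemann_integrable f 0 1, RiemannInt pr = I)).
  destruct Hp as [pr Hpr].
  - exists (RiemannInt (@continuity_implies_RiemannInt f 0 1 ltac:(lra) (fun x _ => H x))). eexists; reflexivity.
  - rewrite <- Hpr. symmetry. apply RInt_Reals.
Qed.

Lemma RInt_shift (f : R -> R) c a b : (forall x, continuity_pt f x) ->
  RInt (fun x => f (x + c)) a b = RInt f (a + c) (b + c).
Proof.
  intros H.
  assert (E := RInt_comp_lin f 1 c a b (ex_cont f _ _ H)).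
  replace (1 * a + c) with (a + c) in E by ring. replace (1 * b + c) with (b + c) in E by ring.
  rewrite <- E. apply RInt_ext. intros x _. replace (1 * x + c) with (x + c) by ring. symmetry; exact (scal_one (f (x + c))).
Qed.

Lemma RInt_periodic (f : R -> R) c : (forall x, continuity_pt f x) -> (forall x, f (x + 1) = f x) ->
  RInt (fun x => f (x + c)) 0 1 = RInt f 0 1.
Proof.
  intros H Hp. rewrite RInt_shift by auto. rewrite Rplus_0_l.
  rewrite <- (RInt_Chasles f c 0 (1 + c)) by (apply ex_cont; auto).
  rewrite <- (RInt_Chasles f 0 1 (1 + c)) by (apply ex_cont; auto).
  assert (E : RInt f 1 (1 + c) = RInt f 0 c).
  { rewrite <- (RInt_ext (fun x => f (x + 1)) f 0 c). 2: { intros; apply Hp. }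
    rewrite RInt_shift by auto. f_equal; ring. }
  rewrite E. rewrite <- (opp_RInt_swap f 0 c) by (apply ex_cont; auto).
  set (u := RInt f 0 c); set (w := RInt f 0 1). unfold plus, opp; simpl; ring.
Qed.

Lemma RInt_plusR (f g : R -> R) a b : (forall x, continuity_pt f x) -> (forall x, continuity_pt g x) ->
  RInt (fun x => f x + g x) a b = RInt f a b + RInt g a b.
Proof. intros; apply (RInt_plus f g); apply ex_cont; auto. Qed.

Lemma RInt_minusR (f g : R -> R) a b : (forall x, continuity_pt f x) -> (forall x, continuity_pt g x) ->
  RInt (fun x => f x - g x) a b = RInt f a b - RInt g a b.
Proof. intros; apply (RInt_minus f g); apply ex_cont; auto. Qed.

Lemma RInt_bounds (f : R -> R) lo hi : (forall x, continuity_pt f x) -> (forall x, lo <= f x <= hi) ->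
  lo <= RInt f 0 1 <= hi.
Proof.
  intros H Hb. split.
  - assert (RInt (fun _ => lo) 0 1 <= RInt f 0 1).
    { apply RInt_le; [lra|apply ex_RInt_const|apply ex_cont; auto|]. intros; apply Hb. }
    rewrite RInt_const in H0. change scal with Rmult in H0. lra.
  - assert (RInt f 0 1 <= RInt (fun _ => hi) 0 1).
    { apply RInt_le; [lra|apply ex_cont; auto|apply ex_RInt_const|]. intros; apply Hb. }
    rewrite RInt_const in H0. change scal with Rmult in H0. lra.
Qed.

Lemma Cdiv_mul p d : 0 < Cabs d -> Cmul (Cdiv p d) d = p.
Proof.
  intros H. apply Cabs_pos in H. destruct p as [a b], d as [c e]; unfold Re, Im in *; cbn [fst snd] in *.
  apply Ceq; unfold Cdiv, Cmul, Cinv, Re, Im; cbn [fst snd]; field; lra.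
Qed.

Lemma Cabs_hdiff x y eps : Cabs (Csub (mkC y eps) (mkC x eps)) = Rabs (y - x).
Proof.
  unfold Cabs, Csub, Cadd, Copp, mkC, Re, Im; cbn [fst snd].
  rewrite <- sqrt_Rsqr_abs. f_equal. unfold Rsqr; ring.
Qed.

Lemma v_lip (h : R) v eps x : holomorphic_on_strip h v -> Rabs eps < h ->
  exists C d, 0 < d /\ 0 <= C /\ forall y, Rabs (y - x) < d ->
    Cabs (Csub (v (mkC y eps)) (v (mkC x eps))) <= C * Rabs (y - x).
Proof.
  intros Hh He. destruct (Hh (mkC x eps) He) as [l Hl].
  destruct (Hl 1 ltac:(lra)) as [d [Hd Hw]].
  exists (Cabs l + 1), d. split; auto. split; [generalize (Cabs_ge0 l); lra|].
  intros y Hy. destruct (Req_dec y x) as [->|Hne].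
  - rewrite Csub_self, Cabs_RtoC, Rabs_R0. unfold Rminus; rewrite Rplus_opp_r, Rabs_R0. lra.
  - assert (Hw0 : mkC y eps <> mkC x eps) by (unfold mkC; intros Q; injection Q; lra).
    rewrite <- (Cabs_hdiff x y eps) in Hy. specialize (Hw _ Hw0 Hy).
    set (dz := Csub (mkC y eps) (mkC x eps)) in *.
    assert (Hdz : 0 < Cabs dz) by (unfold dz; rewrite Cabs_hdiff; apply Rabs_pos_lt; lra).
    set (Q := Cdiv (Csub (v (mkC y eps)) (v (mkC x eps))) dz) in *.
    assert (HQ : Cabs Q <= Cabs l + 1) by (generalize (Cabs_sub_ge Q l); lra).
    rewrite <- (Cdiv_mul (Csub (v (mkC y eps)) (v (mkC x eps))) dz Hdz). fold Q.
    rewrite Cabs_mul. unfold dz; rewrite Cabs_hdiff.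
    apply Rmult_le_compat_r; auto. apply Rabs_pos.
Qed.

Lemma v_cont h v eps : holomorphic_on_strip h v -> Rabs eps < h -> Ccont (fun x => v (mkC x eps)).
Proof.
  intros Hh He x.
  destruct (v_lip h v eps x Hh He) as [C [d [Hd [HC Hl]]]].
  split; intros e Hep; exists (Rmin d (e / (C + 1))); (split; [apply Rmin_pos; [lra|apply Rdiv_lt_0_compat; lra]|]);
    intros y [_ Hy]; simpl in *; unfold R_dist in *;
    assert (Hy1 : Rabs (y - x) < d) by (eapply Rlt_le_trans; [exact Hy|apply Rmin_l]);
    assert (Hy2 : Rabs (y - x) < e / (C + 1)) by (eapply Rlt_le_trans; [exact Hy|apply Rmin_r]);
    specialize (Hl y Hy1);
    assert (C * Rabs (y - x) < e) by
      (assert (Hp := Rabs_pos (y - x));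
       apply Rle_lt_trans with ((C + 1) * Rabs (y - x)); [nra|];
       apply Rmult_lt_reg_r with (/ (C + 1)); [apply Rinv_0_lt_compat; lra|];
       replace ((C + 1) * Rabs (y - x) * / (C + 1)) with (Rabs (y - x)) by (field; lra); exact Hy2).
  - eapply Rle_lt_trans; [|exact H]. eapply Rle_trans; [|exact Hl].
    change (Re (v (mkC y eps)) - Re (v (mkC x eps))) with (Re (Csub (v (mkC y eps)) (v (mkC x eps)))). apply Cabs_Re.
  - eapply Rle_lt_trans; [|exact H]. eapply Rle_trans; [|exact Hl].
    change (Im (v (mkC y eps)) - Im (v (mkC x eps))) with (Im (Csub (v (mkC y eps)) (v (mkC x eps)))). apply Cabs_Im.
Qed.

Lemma per_nat (F : R -> R) : (forall x, F (x + 1) = F x) -> forall n y, F (y + INR n) = F y.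
Proof.
  intros Hp n; induction n; intros y; [rewrite Rplus_0_r; reflexivity|].
  rewrite S_INR. replace (y + (INR n + 1)) with ((y + INR n) + 1) by ring. rewrite Hp; auto.
Qed.

Lemma per_Z (F : R -> R) : (forall x, F (x + 1) = F x) -> forall k y, F (y + IZR k) = F y.
Proof.
  intros Hp k y. destruct (Z_le_gt_dec 0 k).
  - rewrite <- (Z2Nat.id k) by lia. rewrite <- INR_IZR_INZ. apply per_nat; auto.
  - replace k with (- Z.of_nat (Z.to_nat (- k)))%Z by lia. rewrite opp_IZR, <- INR_IZR_INZ.
    rewrite <- (per_nat F Hp (Z.to_nat (-k)) (y + - INR (Z.to_nat (- k)))).
    f_equal; ring.
Qed.

Lemma exists_min (F : R -> R) : (forall x, continuity_pt F x) -> (forall x, F (x + 1) = F x) ->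
  exists x0, forall x, F x0 <= F x.
Proof.
  intros Hc Hp. destruct (continuity_ab_min F 0 1 ltac:(lra) (fun c _ => Hc c)) as [x0 [Hx0 _]].
  exists x0. intros x. destruct (base_Int_part x) as [H1 H2].
  replace (F x) with (F (x - IZR (Int_part x))). apply Hx0. lra.
  rewrite <- (per_Z F Hp (Int_part x) (x - IZR (Int_part x))). f_equal; ring.
Qed.

Lemma minimum_spec (F : R -> R) : (forall x, continuity_pt F x) -> (forall x, F (x + 1) = F x) ->
  forall x, minimum F <= F x.
Proof.
  intros Hc Hp. destruct (exists_min F Hc Hp) as [x0 Hx0].
  unfold minimum.
  destruct (epsilon_spec (inhabits 0) (fun r => (exists x, F x = r) /\ forall x, r <= F x)) as [_ H].
  - exists (F x0). split; eauto.
  - exact H.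
Qed.

Lemma mapply_mmul A B w : mapply (mmul A B) w = mapply A (mapply B w).
Proof.
  destruct A as [[a b] [c d]], B as [[a' b'] [c' d']], w as [w1 w2].
  unfold mmul, mapply, mk2; cbn [fst snd].
  f_equal; apply Ceq; unfold Cadd, Cmul, Re, Im; cbn [fst snd]; ring.
Qed.

Lemma mapply_scale A c w : mapply A (vscale c w) = vscale c (mapply A w).
Proof.
  destruct A as [[a b] [c' d]], w as [w1 w2].
  unfold vscale, mapply; cbn [fst snd].
  f_equal; apply Ceq; unfold Cadd, Cmul, Re, Im; cbn [fst snd]; ring.
Qed.

Lemma mapply_add A p r : mapply A (C2add p r) = C2add (mapply A p) (mapply A r).
Proof.
  destruct A as [[a b] [c' d]], p as [p1 p2], r as [r1 r2].
  unfold C2add, mapply; cbn [fst snd].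
  f_equal; apply Ceq; unfold Cadd, Cmul, Re, Im; cbn [fst snd]; ring.
Qed.

Lemma mapply_mid w : mapply mid w = w.
Proof.
  destruct w as [w1 w2]. unfold mid, mk2, mapply; cbn [fst snd].
  f_equal; apply Ceq; unfold Cadd, Cmul, RtoC, Re, Im; cbn [fst snd]; ring.
Qed.

Lemma vscale_vscale c d w : vscale c (vscale d w) = vscale (Cmul c d) w.
Proof.
  destruct w as [w1 w2]. unfold vscale; cbn [fst snd].
  f_equal; apply Ceq; unfold Cmul, Re, Im; cbn [fst snd]; ring.
Qed.

Lemma step_u_gen (a s : Cplx) : 0 < Cabs (Csub a s) ->
  mapply (mk2 a (RtoC (-1)) (RtoC 1) (RtoC 0)) (RtoC 1, s) = vscale (Csub a s) (RtoC 1, Cinv (Csub a s)).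
Proof.
  intros H. apply Cabs_pos in H. destruct a as [a1 a2], s as [s1 s2].
  unfold Csub, Cadd, Copp, Re, Im in *; cbn [fst snd] in *.
  unfold mapply, mk2, vscale; cbn [fst snd].
  f_equal; apply Ceq; unfold Cadd, Cmul, Cinv, RtoC, Re, Im; cbn [fst snd]; field; lra.
Qed.

Lemma step_s_gen (a u u' : Cplx) : 0 < Cabs (Csub a u') -> u = Cinv (Csub a u') ->
  mapply (mk2 a (RtoC (-1)) (RtoC 1) (RtoC 0)) (u, RtoC 1) = vscale u (u', RtoC 1).
Proof.
  intros H ->. apply Cabs_pos in H. destruct a as [a1 a2], u' as [s1 s2].
  unfold Csub, Cadd, Copp, Re, Im in *; cbn [fst snd] in *.
  unfold mapply, mk2, vscale; cbn [fst snd].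
  f_equal; apply Ceq; unfold Cadd, Cmul, Cinv, RtoC, Re, Im; cbn [fst snd]; field; lra.
Qed.

Lemma pow_le1 k n : 0 <= k <= 1 -> k ^ n <= 1.
Proof. intros H; induction n; simpl; [lra|]. assert (0 <= k ^ n) by (apply pow_le; lra). nra. Qed.

Lemma ln_le x y : 0 < x -> x <= y -> ln x <= ln y.
Proof. intros H1 H2. destruct H2 as [H2|H2]; [apply Rlt_le, ln_increasing; auto|subst; lra]. Qed.

Section Cocycle.
Variables (a s u : R -> Cplx) (alpha lam q : R).
Hypothesis Hs_eq : forall x, s (x + alpha) = Cinv (Csub (a x) (s x)).
Hypothesis Hu_eq : forall x, u x = Cinv (Csub (a x) (u (x + alpha))).
Hypothesis Hds : forall x, lam <= Cabs (Csub (a x) (s x)).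
Hypothesis Hdu : forall x, lam <= Cabs (Csub (a x) (u (x + alpha))).
Hypothesis Hq : 0 < q < 1.
Hypothesis Hlam : 1 < lam.
Hypothesis Hsq : forall x, Cabs (s x) <= q.
Hypothesis Huq : forall x, Cabs (u x) <= q.

Definition Bm (x : R) : M2 := mk2 (a x) (RtoC (-1)) (RtoC 1) (RtoC 0).
Definition eu (x : R) : C2 := (RtoC 1, s x).
Definition es (x : R) : C2 := (u x, RtoC 1).

Fixpoint Pu (n : nat) (x : R) : Cplx :=
  match n with O => RtoC 1 | S k => Cmul (Pu k x) (Csub (a (x + INR k * alpha)) (s (x + INR k * alpha))) end.
Fixpoint Ps (n : nat) (x : R) : Cplx :=
  match n with O => RtoC 1 | S k => Cmul (Ps k x) (u (x + INR k * alpha)) end.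

Lemma shift_S x n : x + INR n * alpha + alpha = x + INR (S n) * alpha.
Proof. rewrite S_INR; ring. Qed.

Lemma iter_u n x c : mapply (cocycle_iter alpha Bm n x) (vscale c (eu x)) = vscale (Cmul c (Pu n x)) (eu (x + INR n * alpha)).
Proof.
  induction n.
  - cbn [cocycle_iter Pu Ps]. rewrite mapply_mid. change (INR 0) with 0. replace (x + 0 * alpha) with x by ring. f_equal.
    apply Ceq; unfold Cmul, RtoC, Re, Im; cbn [fst snd]; ring.
  - cbn [cocycle_iter]. rewrite mapply_mmul, IHn, mapply_scale.
    unfold Bm at 1. unfold eu at 1. rewrite step_u_gen by (generalize (Hds (x + INR n * alpha)); lra).
    rewrite <- Hs_eq, shift_S, vscale_vscale. f_equal.
    simpl Pu. apply Ceq; unfold Cmul, Re, Im; cbn [fst snd]; ring.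
Qed.

Lemma iter_s n x c : mapply (cocycle_iter alpha Bm n x) (vscale c (es x)) = vscale (Cmul c (Ps n x)) (es (x + INR n * alpha)).
Proof.
  induction n.
  - cbn [cocycle_iter Pu Ps]. rewrite mapply_mid. change (INR 0) with 0. replace (x + 0 * alpha) with x by ring. f_equal.
    apply Ceq; unfold Cmul, RtoC, Re, Im; cbn [fst snd]; ring.
  - cbn [cocycle_iter]. rewrite mapply_mmul, IHn, mapply_scale.
    unfold Bm at 1. unfold es at 1.
    rewrite (step_s_gen _ _ (u (x + INR n * alpha + alpha))) by first [apply Hu_eq | generalize (Hdu (x + INR n * alpha)); lra].
    rewrite shift_S, vscale_vscale. f_equal.
    simpl Ps. apply Ceq; unfold Cmul, Re, Im; cbn [fst snd]; ring.
Qed.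

Lemma Pu_bound n x : lam ^ n <= Cabs (Pu n x).
Proof.
  induction n; simpl. rewrite Cabs_RtoC, Rabs_R1; lra.
  rewrite Cabs_mul. generalize (Hds (x + INR n * alpha)). assert (0 <= lam ^ n) by (apply pow_le; lra). nra.
Qed.

Lemma u_small x : Cabs (u x) <= / lam.
Proof.
  rewrite Hu_eq. rewrite Cabs_inv by (generalize (Hdu x); lra). apply Rinv_le_contravar; auto. lra.
Qed.

Lemma Ps_bound n x : Cabs (Ps n x) <= (/ lam) ^ n.
Proof.
  induction n; simpl. rewrite Cabs_RtoC, Rabs_R1; lra.
  rewrite Cabs_mul. assert (H := u_small (x + INR n * alpha)). assert (0 <= Cabs (Ps n x)) by apply Cabs_ge0.
  assert (0 <= Cabs (u (x + INR n * alpha))) by apply Cabs_ge0.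
  assert (0 <= (/lam) ^ n) by (apply pow_le; apply Rlt_le, Rinv_0_lt_compat; lra). nra.
Qed.

Lemma vnorm_pair_bounds (z : Cplx) : Cabs z <= 1 -> 1 <= vnorm (RtoC 1, z) <= sqrt 2 /\ 1 <= vnorm (z, RtoC 1) <= sqrt 2.
Proof.
  intros H. assert (0 <= Cabs z) by apply Cabs_ge0.
  unfold vnorm; cbn [fst snd]. rewrite Cabs_RtoC, Rabs_R1.
  assert (1 <= sqrt (1 ^ 2 + Cabs z ^ 2)) by (apply le_sqrt_sq; nra).
  assert (1 <= sqrt (Cabs z ^ 2 + 1 ^ 2)) by (apply le_sqrt_sq; nra).
  assert (sqrt (1 ^ 2 + Cabs z ^ 2) <= sqrt 2) by (apply sqrt_le_1_alt; nra).
  assert (sqrt (Cabs z ^ 2 + 1 ^ 2) <= sqrt 2) by (apply sqrt_le_1_alt; nra).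
  tauto.
Qed.

Lemma eu_bounds x : 1 <= vnorm (eu x) <= sqrt 2.
Proof. apply vnorm_pair_bounds. generalize (Hsq x); lra. Qed.
Lemma es_bounds x : 1 <= vnorm (es x) <= sqrt 2.
Proof. apply vnorm_pair_bounds. generalize (Huq x); lra. Qed.


Lemma Cabs_Pu_pos n x : 0 < Cabs (Pu n x).
Proof. eapply Rlt_le_trans; [|apply Pu_bound]. apply pow_lt; lra. Qed.

Lemma opnorm_lower n x : Cabs (Pu n x) / sqrt 2 <= opnorm (cocycle_iter alpha Bm n x).
Proof.
  destruct (eu_bounds x) as [H1 H2].
  set (w := vscale (RtoC (/ vnorm (eu x))) (eu x)).
  assert (Hw : vnorm w = 1).
  { unfold w. rewrite vnorm_scale, Cabs_RtoC, Rabs_right. field; lra.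
    apply Rle_ge, Rlt_le, Rinv_0_lt_compat; lra. }
  eapply Rle_trans; [|apply (opnorm_ge _ w Hw)].
  unfold w. rewrite iter_u, vnorm_scale, Cabs_mul, Cabs_RtoC, Rabs_right
    by (apply Rle_ge, Rlt_le, Rinv_0_lt_compat; lra).
  destruct (eu_bounds (x + INR n * alpha)) as [H3 H4].
  assert (Hp := Cabs_ge0 (Pu n x)).
  assert (Hs2 : 1 < sqrt 2) by (rewrite <- sqrt_1; apply sqrt_lt_1_alt; lra).
  assert (/ sqrt 2 <= / vnorm (eu x)) by (apply Rinv_le_contravar; lra).
  assert (0 < / sqrt 2) by (apply Rinv_0_lt_compat; lra).
  unfold Rdiv. rewrite Rmult_comm.
  apply Rle_trans with (/ vnorm (eu x) * Cabs (Pu n x)); [nra|].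
  assert (0 <= / vnorm (eu x) * Cabs (Pu n x)) by nra. nra.
Qed.

Definition K2 := 2 * sqrt 2 / (1 - q).

Lemma decomp (w : C2) x :
  let D := Csub (RtoC 1) (Cmul (s x) (u x)) in
  0 < Cabs D ->
  w = C2add (vscale (Cmul (Cinv D) (Csub (fst w) (Cmul (u x) (snd w)))) (eu x))
            (vscale (Cmul (Cinv D) (Csub (snd w) (Cmul (s x) (fst w)))) (es x)).
Proof.
  intros D HD. apply Cabs_pos in HD. unfold D in *. unfold eu, es.
  destruct w as [[w1 w2] [w3 w4]]. destruct (s x) as [s1 s2]. destruct (u x) as [u1 u2].
  unfold Csub, Cadd, Copp, Cmul, RtoC, Re, Im in HD; cbn [fst snd] in HD.
  unfold C2add, vscale; cbn [fst snd]. f_equal; apply Ceq;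
  unfold Csub, Cadd, Copp, Cmul, Cinv, RtoC, Re, Im; cbn [fst snd]; field; lra.
Qed.

Lemma coef_bound x (z1 z2 t : Cplx) : Cabs z1 <= 1 -> Cabs z2 <= 1 -> Cabs t <= q ->
  let D := Csub (RtoC 1) (Cmul (s x) (u x)) in
  Cabs (Cmul (Cinv D) (Csub z1 (Cmul t z2))) <= / (1 - q).
Proof.
  intros H1 H2 Ht D.
  assert (HD : 1 - q ^ 2 <= Cabs D).
  { unfold D. eapply Rle_trans; [|apply Cabs_sub_ge]. rewrite Cabs_RtoC, Rabs_R1, Cabs_mul.
    generalize (Hsq x) (Huq x) (Cabs_ge0 (s x)) (Cabs_ge0 (u x)). intros. nra. }
  assert (0 < 1 - q ^ 2) by nra.
  rewrite Cabs_mul, Cabs_inv by lra.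
  assert (Cabs (Csub z1 (Cmul t z2)) <= 1 + q).
  { eapply Rle_trans; [apply Cabs_sub_le|]. rewrite Cabs_mul.
    generalize (Cabs_ge0 t) (Cabs_ge0 z2). intros; nra. }
  assert (0 <= Cabs (Csub z1 (Cmul t z2))) by apply Cabs_ge0.
  replace (/ (1 - q)) with ((1 + q) / (1 - q ^ 2)) by (field; split; nra).
  unfold Rdiv. rewrite Rmult_comm. apply Rmult_le_compat; auto.
  - apply Rlt_le, Rinv_0_lt_compat; lra.
  - apply Rinv_le_contravar; lra.
Qed.

Lemma opnorm_upper n x : opnorm (cocycle_iter alpha Bm n x) <= K2 * Cabs (Pu n x).
Proof.
  apply opnorm_le. intros w Hw.
  set (D := Csub (RtoC 1) (Cmul (s x) (u x))).
  assert (HD : 0 < Cabs D).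
  { unfold D. eapply Rlt_le_trans; [|apply Cabs_sub_ge]. rewrite Cabs_RtoC, Rabs_R1, Cabs_mul.
    generalize (Hsq x) (Huq x) (Cabs_ge0 (s x)) (Cabs_ge0 (u x)). intros. nra. }
  rewrite (decomp w x HD). rewrite mapply_add, iter_u, iter_s.
  eapply Rle_trans; [apply vnorm_tri|]. rewrite !vnorm_scale, !Cabs_mul.
  assert (Hc1 := coef_bound x (fst w) (snd w) (u x) ltac:(rewrite <- Hw; apply Cabs_fst_le) ltac:(rewrite <- Hw; apply Cabs_snd_le) (Huq x)).
  assert (Hc2 := coef_bound x (snd w) (fst w) (s x) ltac:(rewrite <- Hw; apply Cabs_snd_le) ltac:(rewrite <- Hw; apply Cabs_fst_le) (Hsq x)).
  simpl in Hc1, Hc2. fold D in Hc1, Hc2. rewrite Cabs_mul in Hc1, Hc2.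
  set (c1 := Cabs (Cinv D) * Cabs (Csub (fst w) (Cmul (u x) (snd w)))) in *.
  set (c2 := Cabs (Cinv D) * Cabs (Csub (snd w) (Cmul (s x) (fst w)))) in *.
  assert (0 <= c1) by (unfold c1; apply Rmult_le_pos; apply Cabs_ge0).
  assert (0 <= c2) by (unfold c2; apply Rmult_le_pos; apply Cabs_ge0).
  destruct (eu_bounds (x + INR n * alpha)) as [E1 E2].
  destruct (es_bounds (x + INR n * alpha)) as [E3 E4].
  assert (HPu := Pu_bound n x). assert (HPs := Ps_bound n x).
  assert (Hl1 : 1 <= lam ^ n) by (apply pow_R1_Rle; lra).
  assert (Hl2 : (/ lam) ^ n <= 1) by (apply pow_le1; split; [apply Rlt_le, Rinv_0_lt_compat; lra|rewrite <- Rinv_1; apply Rinv_le_contravar; lra]).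
  assert (0 <= Cabs (Ps n x)) by apply Cabs_ge0.
  assert (0 <= Cabs (Pu n x)) by apply Cabs_ge0.
  assert (Hq1 : 0 < / (1 - q)) by (apply Rinv_0_lt_compat; lra).
  assert (c1 * Cabs (Pu n x) * vnorm (eu (x + INR n * alpha)) <= / (1 - q) * Cabs (Pu n x) * sqrt 2).
  { apply Rmult_le_compat; try nra. }
  assert (c2 * Cabs (Ps n x) * vnorm (es (x + INR n * alpha)) <= / (1 - q) * Cabs (Pu n x) * sqrt 2).
  { apply Rmult_le_compat; try nra. }
  unfold K2. replace (2 * sqrt 2 / (1 - q) * Cabs (Pu n x)) with (2 * (/ (1 - q) * Cabs (Pu n x) * sqrt 2)) by (field; lra).
  fold D. fold c1 c2. lra.
Qed.

Fixpoint Sphi (n : nat) (x : R) : R :=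
  match n with O => 0 | S k => Sphi k x + ln (Cabs (Csub (a (x + INR k * alpha)) (s (x + INR k * alpha)))) end.

Lemma ln_Pu n x : ln (Cabs (Pu n x)) = Sphi n x.
Proof.
  induction n; simpl. rewrite Cabs_RtoC, Rabs_R1, ln_1; reflexivity.
  rewrite Cabs_mul, ln_mult. rewrite IHn; reflexivity. apply Cabs_Pu_pos.
  generalize (Hds (x + INR n * alpha)); lra.
Qed.

Lemma log_diff n x : Rabs (ln (opnorm (cocycle_iter alpha Bm n x)) - Sphi n x) <= ln K2 + ln (sqrt 2).
Proof.
  assert (Hs2 : 1 < sqrt 2) by (rewrite <- sqrt_1; apply sqrt_lt_1_alt; lra).
  assert (HK : 1 <= K2).
  { unfold K2. apply Rmult_le_reg_r with (1 - q); [lra|]. field_simplify; lra. }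
  assert (HP := Cabs_Pu_pos n x).
  assert (L := opnorm_lower n x). assert (U := opnorm_upper n x).
  assert (0 < Cabs (Pu n x) / sqrt 2) by (apply Rdiv_lt_0_compat; lra).
  rewrite <- ln_Pu. apply Rabs_le. split.
  - assert (ln (Cabs (Pu n x) / sqrt 2) <= ln (opnorm (cocycle_iter alpha Bm n x))) by (apply ln_le; auto).
    unfold Rdiv in H0. rewrite ln_mult, ln_Rinv in H0 by (try apply Rinv_0_lt_compat; lra).
    assert (0 <= ln K2) by (rewrite <- ln_1; apply ln_le; lra). lra.
  - assert (ln (opnorm (cocycle_iter alpha Bm n x)) <= ln (K2 * Cabs (Pu n x))) by (apply ln_le; auto; lra).
    rewrite ln_mult in H0 by lra.
    assert (0 <= ln (sqrt 2)) by (rewrite <- ln_1; apply ln_le; lra). lra.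
Qed.

End Cocycle.

Lemma C2cont_1f (f : R -> Cplx) : Ccont f -> C2_continuous (fun x => (RtoC 1, f x)).
Proof.
  intros Hf x e He. cbn [fst snd].
  assert (Hc := cont_Cabs (fun y => Csub (f y) (f x)) (Ccont_sub _ _ Hf (Ccont_const (f x))) x).
  destruct (Hc e He) as [d [Hd H]]. exists d; split; auto. intros y Hy.
  change (Cadd (f y) (Copp (f x))) with (Csub (f y) (f x)).
  change (Cadd (RtoC 1) (Copp (RtoC 1))) with (Csub (RtoC 1) (RtoC 1)).
  eapply Rle_lt_trans; [apply vnorm_le_sum|]. cbn [fst snd]. rewrite Csub_self, Cabs_RtoC, Rabs_R0, Rplus_0_l.
  destruct (Req_dec y x) as [->|Hne].
  - rewrite Csub_self, Cabs_RtoC, Rabs_R0; lra.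
  - specialize (H y (conj (conj I (not_eq_sym Hne)) Hy)). simpl in H. unfold R_dist in H.
    rewrite Csub_self, Cabs_RtoC, Rabs_R0, Rminus_0_r in H. eapply Rle_lt_trans; [apply RRle_abs|exact H].
Qed.

Lemma C2cont_f1 (f : R -> Cplx) : Ccont f -> C2_continuous (fun x => (f x, RtoC 1)).
Proof.
  intros Hf x e He. cbn [fst snd].
  assert (Hc := cont_Cabs (fun y => Csub (f y) (f x)) (Ccont_sub _ _ Hf (Ccont_const (f x))) x).
  destruct (Hc e He) as [d [Hd H]]. exists d; split; auto. intros y Hy.
  change (Cadd (f y) (Copp (f x))) with (Csub (f y) (f x)).
  change (Cadd (RtoC 1) (Copp (RtoC 1))) with (Csub (RtoC 1) (RtoC 1)).
  eapply Rle_lt_trans; [apply vnorm_le_sum|]. cbn [fst snd]. rewrite Csub_self, Cabs_RtoC, Rabs_R0, Rplus_0_r.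
  destruct (Req_dec y x) as [->|Hne].
  - rewrite Csub_self, Cabs_RtoC, Rabs_R0; lra.
  - specialize (H y (conj (conj I (not_eq_sym Hne)) Hy)). simpl in H. unfold R_dist in H.
    rewrite Csub_self, Cabs_RtoC, Rabs_R0, Rminus_0_r in H. eapply Rle_lt_trans; [apply RRle_abs|exact H].
Qed.

Lemma Ccont_ext f g : (forall x, f x = g x) -> Ccont f -> Ccont g.
Proof.
  intros E H x; destruct (H x) as [H1 H2]; split;
  [apply (continuity_pt_ext (fun y => Re (f y))) | apply (continuity_pt_ext (fun y => Im (f y)))]; auto;
  intros; rewrite E; reflexivity.
Qed.

Lemma Mcont_mmul (A B : R -> M2) : Mcont A -> Mcont B -> Mcont (fun x => mmul (A x) (B x)).
Proof.
  intros [A1 [A2 [A3 A4]]] [B1 [B2 [B3 B4]]].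
  split; [|split; [|split]].
  - apply (Ccont_ext (fun x => Cadd (Cmul (ent11 (A x)) (ent11 (B x))) (Cmul (ent12 (A x)) (ent21 (B x))))).
    { intros x; destruct (A x) as [[? ?] [? ?]], (B x) as [[? ?] [? ?]]; reflexivity. }
    apply Ccont_add; apply Ccont_mul; auto.
  - apply (Ccont_ext (fun x => Cadd (Cmul (ent11 (A x)) (ent12 (B x))) (Cmul (ent12 (A x)) (ent22 (B x))))).
    { intros x; destruct (A x) as [[? ?] [? ?]], (B x) as [[? ?] [? ?]]; reflexivity. }
    apply Ccont_add; apply Ccont_mul; auto.
  - apply (Ccont_ext (fun x => Cadd (Cmul (ent21 (A x)) (ent11 (B x))) (Cmul (ent22 (A x)) (ent21 (B x))))).
    { intros x; destruct (A x) as [[? ?] [? ?]], (B x) as [[? ?] [? ?]]; reflexivity. }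
    apply Ccont_add; apply Ccont_mul; auto.
  - apply (Ccont_ext (fun x => Cadd (Cmul (ent21 (A x)) (ent12 (B x))) (Cmul (ent22 (A x)) (ent22 (B x))))).
    { intros x; destruct (A x) as [[? ?] [? ?]], (B x) as [[? ?] [? ?]]; reflexivity. }
    apply Ccont_add; apply Ccont_mul; auto.
Qed.

Lemma Mcont_const (M : M2) : Mcont (fun _ => M).
Proof. repeat split; apply Ccont_const. Qed.

Lemma Mcont_shift (A : R -> M2) c : Mcont A -> Mcont (fun x => A (x + c)).
Proof. intros [A1 [A2 [A3 A4]]]. repeat split; apply (Ccont_shift (fun x => _ (A x))); auto. Qed.

Lemma Mcont_iter (A : R -> M2) alpha n : Mcont A -> Mcont (cocycle_iter alpha A n).
Proof.
  intros HA. induction n; simpl.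
  - apply Mcont_const.
  - apply (Mcont_mmul (fun x => A (x + INR n * alpha)) (cocycle_iter alpha A n)); auto.
    apply Mcont_shift; auto.
Qed.

Lemma final_ineq m sg : 2 < m -> / (m - 1) <= sg <= 1 ->
  0 < ((1 - sg / m) ^ 2 + 1 / m ^ 2) / (1 + sg ^ 2) /\
  ((1 - sg / m) ^ 2 + 1 / m ^ 2) / (1 + sg ^ 2) <= (1 - / (m - 1) / m) ^ 2 /\
  (1 + / (m - 1) / m) ^ 2 <= (1 + sg / m) ^ 2 + 1 / m ^ 2.
Proof.
  intros Hm [H1 H2].
  set (q := / (m - 1)) in *. assert (Hq : q * (m - 1) = 1) by (unfold q; field; lra).
  assert (Hq0 : 0 < q) by (unfold q; apply Rinv_0_lt_compat; lra).
  set (p := / m). assert (Hp : p * m = 1) by (unfold p; field; lra).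
  assert (Hp0 : 0 < p) by (unfold p; apply Rinv_0_lt_compat; lra).
  assert (Hp1 : p < 1 / 2) by (unfold p; apply Rmult_lt_reg_r with m; [lra|]; field_simplify; lra).
  replace (sg / m) with (sg * p) by (unfold p; field; lra).
  replace (q / m) with (q * p) by (unfold p; field; lra).
  replace (1 / m ^ 2) with (p ^ 2) by (unfold p; field; lra).
  assert (Hsp : sg * p <= p) by nra.
  assert (Hqs : q * p <= sg * p) by nra.
  assert (Hkey : p <= sg * (1 - sg * p)).
  {
    assert (sg * (m - 1) >= 1) by nra.
    assert (sg * (m - sg) >= 1) by nra.
    apply Rmult_le_reg_r with m; [lra|]. replace (sg * (1 - sg * p) * m) with (sg * (m - sg * (p * m))) by ring.
    rewrite Hp. lra. }
  split; [|split].
  - apply Rdiv_lt_0_compat; nra.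
  - apply Rmult_le_reg_r with (1 + sg ^ 2); [nra|]. unfold Rdiv. rewrite Rmult_assoc, Rinv_l by nra. rewrite Rmult_1_r.
    assert (0 <= 1 - sg * p) by nra.
    assert (p ^ 2 <= (1 - sg * p) ^ 2 * sg ^ 2) by (replace ((1 - sg * p) ^ 2 * sg ^ 2) with ((sg * (1 - sg * p)) ^ 2) by ring; apply pow_incr; lra).
    assert ((1 - sg * p) ^ 2 <= (1 - q * p) ^ 2) by (apply pow_incr; nra).
    nra.
  - assert ((1 + q * p) ^ 2 <= (1 + sg * p) ^ 2) by (apply pow_incr; nra). nra.
Qed.

Lemma ptwise (A S Dd m q : R) : 2 < m -> m <= A -> 0 <= S <= q -> 0 < q < 1 -> A - S <= Dd <= A + S ->
  ln (1 - q / m) <= ln Dd - ln A <= ln (1 + q / m).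
Proof.
  intros Hm HA HS Hq HD.
  assert (Ht : 0 < q / m < 1 / 2).
  { split. apply Rdiv_lt_0_compat; lra. apply Rmult_lt_reg_r with m; [lra|]. field_simplify; lra. }
  assert (E1 : A * (1 - q / m) <= Dd).
  { assert (q <= A * (q / m)). { apply Rmult_le_reg_r with m; [lra|]. field_simplify; nra. } nra. }
  assert (E2 : Dd <= A * (1 + q / m)).
  { assert (q <= A * (q / m)). { apply Rmult_le_reg_r with m; [lra|]. field_simplify; nra. } nra. }
  assert (0 < A * (1 - q / m)) by nra.
  split.
  - assert (ln (A * (1 - q / m)) <= ln Dd) by (apply ln_le; auto).
    rewrite ln_mult in H0 by lra. lra.
  - assert (ln Dd <= ln (A * (1 + q / m))) by (apply ln_le; lra).
    rewrite ln_mult in H0 by lra. lra.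
Qed.

Theorem proposition4 (h : R) (v : Cplx -> Cplx) (alpha E eps : R) :
  real_analytic_on_T h v ->
  irrational alpha ->
  Rabs eps < h ->
  m_val v E eps > 2 ->
  let m := m_val v E eps in
  let sigma := Rmin 1 ((m - 1) / (m * (m - 2))) in
  uniformly_hyperbolic alpha (Bshift v E eps) /\
  exists Xi : R,
    Un_cv (fun n => L_seq v alpha E eps (S n))
          (integral01 (fun x => ln (Cabs (Csub (RtoC E) (v (mkC x eps))))) + Xi) /\
    ln (((1 - sigma / m) ^ 2 + 1 / m ^ 2) / (1 + sigma ^ 2)) <= 2 * Xi /\
    2 * Xi <= ln ((1 + sigma / m) ^ 2 + 1 / m ^ 2) /\
    Xi >= - ln 2.
Proof.
  intros Hv _ Heps Hm2 m sigma.
  destruct Hv as [Hh [Hhol [Hper Hreal]]].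
  pose (a := fun x => Csub (RtoC E) (v (mkC x eps))).
  assert (Ha_cont : Ccont a) by (apply Ccont_sub; [apply Ccont_const|apply (v_cont h); auto]).
  assert (Ha_per : forall x, a (x + 1) = a x).
  { intros x. unfold a. f_equal. rewrite <- (Hper (mkC x eps) Heps). f_equal.
    apply Ceq; unfold Cadd, mkC, RtoC, Re, Im; cbn [fst snd]; ring. }
  assert (Hm : 2 < m) by exact Hm2.
  assert (Hm_le : forall x, m <= Cabs (a x)).
  { intros x. apply (minimum_spec (fun y => Cabs (a y))).
    - apply cont_Cabs; auto.
    - intros y; rewrite Ha_per; reflexivity. }
  destruct (q_facts m Hm) as [[Hq0 Hq1] [Hql Hl]].
  set (q := / (m - 1)) in *. set (lam := m - q) in *.
  destruct (fixed_point (fun x => a (x + - alpha)) (- alpha) m Hm) as [s [Hs_c [Hs_b [Hs_p Hs_f]]]].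
  { apply Ccont_shift; auto. }
  { intros; apply Hm_le. }
  { intros x; replace (x + 1 + - alpha) with ((x + - alpha) + 1) by ring; apply Ha_per. }
  fold q in Hs_b.
  assert (Hs_eq : forall x, s (x + alpha) = Cinv (Csub (a x) (s x))).
  { intros x. rewrite Hs_f. replace (x + alpha + - alpha) with x by ring. reflexivity. }
  destruct (fixed_point a alpha m Hm) as [u [Hu_c [Hu_b [Hu_p Hu_eq]]]]; auto.
  fold q in Hu_b.
  assert (Hds : forall x, lam <= Cabs (Csub (a x) (s x))).
  { intros x. eapply Rle_trans; [|apply Cabs_sub_ge]. generalize (Hm_le x) (Hs_b x). unfold lam; lra. }
  assert (Hdu : forall x, lam <= Cabs (Csub (a x) (u (x + alpha)))).
  { intros x. eapply Rle_trans; [|apply Cabs_sub_ge]. generalize (Hm_le x) (Hu_b (x + alpha)). unfold lam; lra. }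
  assert (Hq : 0 < q < 1) by lra.
  change (Bshift v E eps) with (Bm a).
  assert (Hs2 : 1 < sqrt 2) by (rewrite <- sqrt_1; apply sqrt_lt_1_alt; lra).
  split.
  {
    exists (eu s), (es u), (sqrt 2), lam.
    split; [apply C2cont_1f; auto|].
    split; [apply C2cont_f1; auto|].
    split.
    { intros x; split; unfold eu, es; intros Q.
      - apply (f_equal fst) in Q; cbn [fst] in Q. unfold RtoC in Q. injection Q; lra.
      - apply (f_equal snd) in Q; cbn [snd] in Q. unfold RtoC in Q. injection Q; lra. }
    split.
    { intros x Hz. unfold eu, es in Hz; cbn [fst snd] in Hz.
      assert (Cabs (Csub (Cmul (RtoC 1) (RtoC 1)) (Cmul (s x) (u x))) = 0) by (rewrite Hz, Cabs_RtoC, Rabs_R0; auto).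
      assert (Hge := Cabs_sub_ge (Cmul (RtoC 1) (RtoC 1)) (Cmul (s x) (u x))).
      rewrite !Cabs_mul, Cabs_RtoC, Rabs_R1 in Hge.
      generalize (Hs_b x) (Hu_b x) (Cabs_ge0 (s x)) (Cabs_ge0 (u x)). intros. nra. }
    split.
    { intros x; split; exists (RtoC 1); unfold eu, es, vscale; cbn [fst snd]; rewrite ?Hs_p, ?Hu_p;
      f_equal; apply Ceq; unfold Cmul, RtoC, Re, Im; cbn [fst snd]; ring. }
    split.
    { intros x; split.
      - exists (Csub (a x) (s x)). unfold Bm, eu. rewrite step_u_gen by (generalize (Hds x); lra).
        rewrite Hs_eq. reflexivity.
      - exists (u x). unfold Bm, es. rewrite (step_s_gen _ _ (u (x + alpha))); auto.
        generalize (Hdu x); lra. }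
    split; [lra|]. split; [lra|]. split.
    { intros x n w [c ->]. rewrite (iter_u a s alpha lam q Hs_eq Hds Hq Hl n x c).
      rewrite !vnorm_scale, Cabs_mul.
      destruct (eu_bounds s q Hq Hs_b x) as [E1 E2]. destruct (eu_bounds s q Hq Hs_b (x + INR n * alpha)) as [E3 E4].
      assert (HP := Pu_bound a s alpha lam Hds Hl n x).
      assert (0 <= Cabs c) by apply Cabs_ge0.
      assert (0 < / sqrt 2) by (apply Rinv_0_lt_compat; lra).
      assert (0 <= lam ^ n) by (apply pow_le; lra).
      assert (/ sqrt 2 * vnorm (eu s x) <= 1).
      { apply Rmult_le_reg_l with (sqrt 2); [lra|]. rewrite <- Rmult_assoc, Rinv_r by lra. lra. }
      apply Rle_ge.
      apply Rle_trans with (Cabs c * lam ^ n).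
      { replace (/ sqrt 2 * lam ^ n * (Cabs c * vnorm (eu s x))) with ((/ sqrt 2 * vnorm (eu s x)) * (Cabs c * lam ^ n)) by ring.
        assert (0 <= Cabs c * lam ^ n) by nra. nra. }
      assert (0 <= Cabs (Pu a s alpha n x)) by apply Cabs_ge0.
      assert (Cabs c * lam ^ n <= Cabs c * Cabs (Pu a s alpha n x)) by nra.
      assert (0 <= Cabs c * Cabs (Pu a s alpha n x)) by nra.
      assert (0 <= Cabs c * Cabs (Pu a s alpha n x) * (vnorm (eu s (x + INR n * alpha)) - 1)) by (apply Rmult_le_pos; lra).
      nra. }
    { intros x n w [c ->]. rewrite (iter_s a u alpha lam q Hu_eq Hdu Hq Hl n x c).
      rewrite !vnorm_scale, Cabs_mul.
      destruct (es_bounds u q Hq Hu_b x) as [E1 E2]. destruct (es_bounds u q Hq Hu_b (x + INR n * alpha)) as [E3 E4].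
      assert (HP := Ps_bound a u alpha lam q Hu_eq Hdu Hq Hl n x).
      rewrite pow_inv in HP.
      assert (0 <= Cabs c) by apply Cabs_ge0.
      assert (0 < / lam ^ n) by (apply Rinv_0_lt_compat, pow_lt; lra).
      assert (0 <= Cabs (Ps u alpha n x)) by apply Cabs_ge0.
      assert (Cabs c * Cabs (Ps u alpha n x) <= Cabs c * / lam ^ n) by nra.
      assert (0 <= Cabs c * Cabs (Ps u alpha n x)) by nra.
      apply Rle_trans with (Cabs c * / lam ^ n * sqrt 2); [nra|].
      assert (0 <= Cabs c * / lam ^ n) by nra.
      replace (sqrt 2 * / lam ^ n * (Cabs c * vnorm (es u x))) with ((Cabs c * / lam ^ n) * (sqrt 2 * vnorm (es u x))) by ring.
      apply Rmult_le_compat_l; auto. assert (sqrt 2 * 1 <= sqrt 2 * vnorm (es u x)) by (apply Rmult_le_compat_l; lra). lra. } }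

  set (phi := fun x => ln (Cabs (Csub (a x) (s x)))).
  assert (Hphi_c : forall x, continuity_pt phi x).
  { intros x. apply (cont_ln (fun y => Cabs (Csub (a y) (s y)))).
    - apply cont_Cabs. apply Ccont_sub; auto.
    - generalize (Hds x); lra. }
  assert (Hphi_p : forall x, phi (x + 1) = phi x) by (intros; unfold phi; rewrite Ha_per, Hs_p; reflexivity).
  assert (HS_c : forall n x, continuity_pt (Sphi a s alpha n) x).
  { induction n; intros x.
    - apply continuity_pt_const; intros ? ?; reflexivity.
    - apply (continuity_pt_plus (Sphi a s alpha n) (fun y => phi (y + INR n * alpha))); auto.
      apply cont_shift; auto. }
  assert (HS_int : forall n, RInt (Sphi a s alpha n) 0 1 = INR n * RInt phi 0 1).
  { induction n.
    - rewrite (RInt_ext _ (fun _ => 0)) by reflexivity. rewrite RInt_const. change scal with Rmult. simpl; ring.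
    - change (Sphi a s alpha (S n)) with (fun x => Sphi a s alpha n x + phi (x + INR n * alpha)).
      rewrite RInt_plusR; auto. 2: { intros; apply cont_shift; auto. }
      rewrite IHn, RInt_periodic by auto. rewrite S_INR, Rmult_plus_distr_r, Rmult_1_l. reflexivity. }
  set (F := fun n x => ln (opnorm (cocycle_iter alpha (Bm a) n x))).
  assert (HMa : Mcont (Bm a)).
  { split; [exact Ha_cont|]. split; [|split].
    - apply (Ccont_ext (fun _ => RtoC (-1))); [intros; reflexivity|apply Ccont_const].
    - apply (Ccont_ext (fun _ => RtoC 1)); [intros; reflexivity|apply Ccont_const].
    - apply (Ccont_ext (fun _ => RtoC 0)); [intros; reflexivity|apply Ccont_const]. }
  assert (HF_c : forall n x, continuity_pt (F n) x).
  { intros n x. apply (cont_ln (fun y => opnorm (cocycle_iter alpha (Bm a) n y))).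
    - apply cont_opnorm, Mcont_iter; auto.
    - eapply Rlt_le_trans; [|apply (opnorm_lower a s alpha lam q Hs_eq Hds Hq Hl Hs_b)].
      apply Rdiv_lt_0_compat; [apply (Cabs_Pu_pos a s alpha lam Hds Hl)|lra]. }
  set (Cst := ln (K2 q) + ln (sqrt 2)).
  assert (Hdiff : forall n, Rabs (integral01 (F n) - INR n * RInt phi 0 1) <= Cst).
  { intros n. rewrite int_eq by auto. rewrite <- HS_int.
    rewrite <- RInt_minusR by auto.
    destruct (RInt_bounds (fun x => F n x - Sphi a s alpha n x) (- Cst) Cst).
    - intros x; apply (continuity_pt_minus (F n) (Sphi a s alpha n)); auto.
    - intros x. assert (HL := log_diff a s u alpha lam q Hs_eq Hu_eq Hds Hdu Hq Hl Hs_b Hu_b n x).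
      fold Cst in HL. unfold F. generalize (Rle_abs (ln (opnorm (cocycle_iter alpha (Bm a) n x)) - Sphi a s alpha n x))
        (Rle_abs (- (ln (opnorm (cocycle_iter alpha (Bm a) n x)) - Sphi a s alpha n x))). rewrite Rabs_Ropp. lra.
    - apply Rabs_le; lra. }
  assert (HCst : 0 <= Cst) by (generalize (Hdiff 0%nat) (Rabs_pos (integral01 (F 0%nat) - INR 0 * RInt phi 0 1)); lra).
  set (Ia := integral01 (fun x => ln (Cabs (a x)))).
  change (integral01 (fun x => ln (Cabs (Csub (RtoC E) (v (mkC x eps)))))) with Ia.
  exists (RInt phi 0 1 - Ia).
  assert (HIa_c : forall x, continuity_pt (fun y => ln (Cabs (a y))) x).
  { intros x. apply (cont_ln (fun y => Cabs (a y))). apply cont_Cabs; auto. generalize (Hm_le x); lra. }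
  assert (HXi : RInt phi 0 1 - Ia = RInt (fun x => phi x - ln (Cabs (a x))) 0 1).
  { unfold Ia. rewrite int_eq by auto. rewrite RInt_minusR; auto. }
  destruct (RInt_bounds (fun x => phi x - ln (Cabs (a x))) (ln (1 - q / m)) (ln (1 + q / m))) as [B1 B2].
  { intros x; apply (continuity_pt_minus phi (fun y => ln (Cabs (a y)))); auto. }
  { intros x. unfold phi. apply (ptwise (Cabs (a x)) (Cabs (s x))); auto.
    - split; [apply Cabs_ge0|auto].
    - split; [apply Cabs_sub_ge|apply Cabs_sub_le]. }
  rewrite <- HXi in B1, B2.
  assert (Hsig : / (m - 1) <= sigma <= 1).
  { unfold sigma. split; [|apply Rmin_l]. apply Rmin_glb; [fold q; lra|].
    apply Rmult_le_reg_r with (m * (m - 2)); [nra|]. unfold Rdiv. rewrite Rmult_assoc, Rinv_l by nra.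
    apply Rmult_le_reg_l with (m - 1); [lra|]. field_simplify; [|lra]. nra. }
  destruct (final_ineq m sigma Hm Hsig) as [F1 [F2 F3]]. fold q in F2, F3.
  assert (Ht : 0 < q / m < 1 / 2).
  { split. apply Rdiv_lt_0_compat; lra. apply Rmult_lt_reg_r with m; [lra|].
    unfold Rdiv. rewrite Rmult_assoc, Rinv_l by lra. lra. }
  pose (Rp := (RInt phi 0 1 : R)). change (RInt phi 0 1) with Rp in Hdiff, B1, B2 |- *.
  split; [|split; [|split]].
  - intros e He.
    destruct (archimed_cor1 (e / (Cst + 1))) as [N [HN HN0]]. { apply Rdiv_lt_0_compat; lra. }
    exists N. intros n Hn. unfold R_dist.
    replace (Ia + (Rp - Ia)) with Rp by ring.
    unfold L_seq. change (integral01 (fun x => ln (opnorm (cocycle_iter alpha (Bshift v E eps) (S n) x)))) with (integral01 (F (S n))).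
    assert (HSn : 0 < INR (S n)) by (apply lt_0_INR; lia).
    replace (/ INR (S n) * integral01 (F (S n)) - Rp) with
      (/ INR (S n) * (integral01 (F (S n)) - INR (S n) * Rp)) by (field; lra).
    rewrite Rabs_mult, Rabs_right by (apply Rle_ge, Rlt_le, Rinv_0_lt_compat; lra).
    assert (Hle : / INR (S n) <= / INR N).
    { apply Rinv_le_contravar. apply lt_0_INR; lia. apply le_INR; lia. }
    assert (0 < / INR (S n)) by (apply Rinv_0_lt_compat; lra).
    assert (Hd := Hdiff (S n)).
    apply Rle_lt_trans with (/ INR (S n) * Cst); [apply Rmult_le_compat_l; lra|].
    apply Rle_lt_trans with (/ INR (S n) * (Cst + 1)); [nra|].
    apply Rlt_le_trans with (e / (Cst + 1) * (Cst + 1)); [|right; field; lra].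
    apply Rmult_lt_compat_r; lra.
  - eapply Rle_trans; [apply ln_le; [exact F1|exact F2]|].
    replace ((1 - q / m) ^ 2) with ((1 - q / m) * (1 - q / m)) by ring. rewrite ln_mult by lra. lra.
  - eapply Rle_trans; [|apply (ln_le ((1 + q / m) ^ 2)); [apply pow_lt; lra|exact F3]].
    replace ((1 + q / m) ^ 2) with ((1 + q / m) * (1 + q / m)) by ring. rewrite ln_mult by lra. lra.
  - assert (ln (/ 2) <= ln (1 - q / m)) by (apply ln_le; lra).
    rewrite ln_Rinv in H by lra. lra.
Qed.
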